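(* Let $g$ satisfy (KPP$_g$) and $f$ satisfy (KPP$_f$). Then problem (H) admits a unique positive bounded steady state that does not depend on $x_1,\ldots,x_{N-1}$.
   Context: Problem (H) (two adjacent half-spaces in $\mathbb{R}^N$, $N\geq2$, $D,d,\mu,\nu>0$): $u_t-D\Delta u=g(u)$ in $\{x_N<0\}\times(0,\infty)$, $v_t-d\Delta v=f(v)$ in $\{x_N>0\}\times(0,\infty)$, $D\partial_{x_N}u=\nu v-\mu u$ and $-d\partial_{x_N}v=\mu u-\nu v$ on $\{x_N=0\}\times(0,\infty)$ ($u$ and $v$ are defined up to $\{x_N=0\}$ by continuity from their respective sides). A steady state is a time-independent solution. (KPP$_g$): $g$ locally Lipschitz, differentiable at $0$, $g(0)=g(1)=0$, $0<g(s)\leq g'(0)s$ on $(0,1)$, $g(s)<0$ for $s>1$. (KPP$_f$): for some $S>0$, $f$ locally Lipschitz, differentiable at $0$, $f(0)=f(S)=0$, $0<f(s)\leq f'(0)s$ on $(0,S)$, $f(s)<0$ for $s>S$. *)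

(* Defs.v *)
From Stdlib Require Import Reals.
From mathcomp Require Import ssreflect ssrfun ssrbool eqtype ssrnat fintype bigop.
Open Scope R_scope.
Set Implicit Arguments.
Unset Strict Implicit.

(* A point of R^N, N = n+1, is written (x', x_N) with x' : 'I_n -> R
   (the coordinates x_1..x_{N-1}) and x_N : R the last coordinate. *)
Definition pt (n : nat) : Type := (('I_n -> R) * R)%type.

Definition upd (n : nat) (x' : 'I_n -> R) (i : 'I_n) (t : R) : 'I_n -> R :=
  fun j => if j == i then t else x' j.

(* coordinate directions: Some i = x_{i+1} (i < n), None = x_N *)
Definition coord (n : nat) (x : pt n) (i : option 'I_n) : R :=
  match i with Some i => x.1 i | None => x.2 end.

Definition dir (n : nat) (U : pt n -> R) (x : pt n) (i : option 'I_n) : R -> R :=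
  fun t => match i with
           | Some i => U (upd x.1 i t, x.2)
           | None => U (x.1, t)
           end.

Definition second_deriv (phi : R -> R) (t0 l : R) : Prop :=
  exists (del : R) (phi1 : R -> R), 0 < del /\
    (forall t, Rabs (t - t0) < del -> derivable_pt_lim phi t (phi1 t)) /\
    derivable_pt_lim phi1 t0 l.

Definition has_laplacian (n : nat) (U : pt n -> R) (x : pt n) (L : R) : Prop :=
  exists lam : option 'I_n -> R,
    (forall i, second_deriv (dir U x i) (coord x i) (lam i)) /\
    L = \big[Rplus/0]_(i < n) lam (Some i) + lam None.

Definition cont_on (n : nat) (U : pt n -> R) (S : pt n -> Prop) : Prop :=
  forall x, S x -> forall eps, 0 < eps -> exists del, 0 < del /\
    forall z, S z -> (forall i, Rabs (z.1 i - x.1 i) < del) ->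
      Rabs (z.2 - x.2) < del -> Rabs (U z - U x) < eps.

Definition left_deriv (phi : R -> R) (t0 l : R) : Prop :=
  forall eps, 0 < eps -> exists del, 0 < del /\
    forall h, - del < h < 0 -> Rabs ((phi (t0 + h) - phi t0) / h - l) < eps.
Definition right_deriv (phi : R -> R) (t0 l : R) : Prop :=
  forall eps, 0 < eps -> exists del, 0 < del /\
    forall h, 0 < h < del -> Rabs ((phi (t0 + h) - phi t0) / h - l) < eps.

Definition lowerH (n : nat) (x : pt n) : Prop := x.2 <= 0.
Definition upperH (n : nat) (x : pt n) : Prop := 0 <= x.2.

(* Steady state of problem (H): U lives on {x_N <= 0}, V on {x_N >= 0}. *)
Definition steady_state (n : nat) (D d mu nu : R) (g f : R -> R)
    (U V : pt n -> R) : Prop :=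
  (forall x : pt n, x.2 < 0 -> exists L, has_laplacian U x L /\ - D * L = g (U x)) /\
  (forall x : pt n, 0 < x.2 -> exists L, has_laplacian V x L /\ - d * L = f (V x)) /\
  cont_on U (@lowerH n) /\ cont_on V (@upperH n) /\
  (forall x' : 'I_n -> R, exists a b : R,
      left_deriv (fun t => U (x', t)) 0 a /\
      right_deriv (fun t => V (x', t)) 0 b /\
      D * a = nu * V (x', 0) - mu * U (x', 0) /\
      - d * b = mu * U (x', 0) - nu * V (x', 0)).

Definition positive_bounded (n : nat) (U V : pt n -> R) : Prop :=
  (forall x : pt n, x.2 <= 0 -> 0 < U x) /\
  (forall x : pt n, 0 <= x.2 -> 0 < V x) /\
  (exists C, forall x : pt n, x.2 <= 0 -> Rabs (U x) <= C) /\
  (exists C, forall x : pt n, 0 <= x.2 -> Rabs (V x) <= C).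

Definition tangential_indep (n : nat) (U V : pt n -> R) : Prop :=
  (forall (x' y' : 'I_n -> R) t, t <= 0 -> U (x', t) = U (y', t)) /\
  (forall (x' y' : 'I_n -> R) t, 0 <= t -> V (x', t) = V (y', t)).

Definition loc_lipschitz (h : R -> R) : Prop :=
  forall a b, exists L, forall s t, a <= s <= b -> a <= t <= b ->
    Rabs (h s - h t) <= L * Rabs (s - t).

Definition KPP_g (g : R -> R) : Prop :=
  loc_lipschitz g /\
  exists g0, derivable_pt_lim g 0 g0 /\ g 0 = 0 /\ g 1 = 0 /\
    (forall s, 0 < s < 1 -> 0 < g s <= g0 * s) /\
    (forall s, 1 < s -> g s < 0).

Definition KPP_f (f : R -> R) : Prop :=
  exists S, 0 < S /\ loc_lipschitz f /\
  exists f0, derivable_pt_lim f 0 f0 /\ f 0 = 0 /\ f S = 0 /\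
    (forall s, 0 < s < S -> 0 < f s <= f0 * s) /\
    (forall s, S < s -> f s < 0).

(* Main.v *)
Require Import Defs.
From Stdlib Require Import Reals Lra Psatz Ranalysis5 FunctionalExtensionality ClassicalEpsilon.
From Coquelicot Require Import Coquelicot.
From mathcomp Require Import ssreflect ssrfun ssrbool eqtype ssrnat fintype bigop.
Open Scope R_scope.
Set Bullet Behavior "Strict Subproofs".

Lemma dcont f x l : derivable_pt_lim f x l -> continuity_pt f x.
Proof. intro H. apply derivable_continuous_pt. exists l. exact H. Qed.

Lemma mvt_open f df a b : a < b ->
  (forall x, a < x < b -> derivable_pt_lim f x (df x)) ->
  (forall x, a <= x <= b -> continuity_pt f x) ->
  exists z, a < z < b /\ f b - f a = df z * (b - a).
Proof.
  intros Hab Hd Hc.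
  set pr1 := fun c (Hc : a < c < b) => (exist _ (df c) (Hd c Hc) : derivable_pt f c).
  set pr2 := fun c (Hc : a < c < b) => (derivable_pt_id c : derivable_pt (fun x:R => x) c).
  destruct (MVT f (fun x:R => x) a b pr1 pr2 Hab Hc) as [z [Hz E]].
  { intros; apply derivable_continuous_pt, derivable_pt_id. }
  exists z; split; auto.
  rewrite (derive_pt_eq_0 _ _ (df z) (pr1 z Hz) (Hd z Hz)) in E.
  rewrite (derive_pt_eq_0 _ _ 1 (pr2 z Hz) (derivable_pt_lim_id z)) in E.
  lra.
Qed.

Lemma mono_le f df a b : a <= b ->
  (forall x, a < x < b -> derivable_pt_lim f x (df x)) ->
  (forall x, a <= x <= b -> continuity_pt f x) ->
  (forall x, a < x < b -> 0 <= df x) -> f a <= f b.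
Proof.
  intros Hab Hd Hc Hp. destruct (Rle_lt_or_eq_dec _ _ Hab) as [H|H].
  - destruct (mvt_open f df a b H Hd Hc) as [z [Hz E]]. specialize (Hp z Hz). nra.
  - subst; lra.
Qed.

Lemma mono_lt f df a b : a < b ->
  (forall x, a < x < b -> derivable_pt_lim f x (df x)) ->
  (forall x, a <= x <= b -> continuity_pt f x) ->
  (forall x, a < x < b -> 0 < df x) -> f a < f b.
Proof.
  intros Hab Hd Hc Hp.
  destruct (mvt_open f df a b Hab Hd Hc) as [z [Hz E]]. specialize (Hp z Hz). nra.
Qed.

Lemma mono_ge f df a b : a <= b ->
  (forall x, a < x < b -> derivable_pt_lim f x (df x)) ->
  (forall x, a <= x <= b -> continuity_pt f x) ->
  (forall x, a < x < b -> df x <= 0) -> f b <= f a.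
Proof.
  intros Hab Hd Hc Hp. destruct (Rle_lt_or_eq_dec _ _ Hab) as [H|H].
  - destruct (mvt_open f df a b H Hd Hc) as [z [Hz E]]. specialize (Hp z Hz). nra.
  - subst; lra.
Qed.

Lemma mono_gt f df a b : a < b ->
  (forall x, a < x < b -> derivable_pt_lim f x (df x)) ->
  (forall x, a <= x <= b -> continuity_pt f x) ->
  (forall x, a < x < b -> df x < 0) -> f b < f a.
Proof.
  intros Hab Hd Hc Hp.
  destruct (mvt_open f df a b Hab Hd Hc) as [z [Hz E]]. specialize (Hp z Hz). nra.
Qed.

Lemma sign_const f : (forall t, 0 < t -> continuity_pt f t) -> (forall t, 0 < t -> f t <> 0) ->
  (forall t, 0 < t -> 0 < f t) \/ (forall t, 0 < t -> f t < 0).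
Proof.
  intros Hc Hn. destruct (Rlt_or_le 0 (f 1)) as [HA|HA].
  - left. intros t Ht. destruct (Rlt_or_le 0 (f t)) as [H2|H2]; auto. exfalso.
    assert (f t < 0) by (specialize (Hn t Ht); lra).
    destruct (Rlt_or_le t 1) as [Ht1|Ht1].
    + destruct (IVT_interv f t 1) as [z [Hz Ez]]; auto.
      { intros; apply Hc; lra. }
      apply (Hn z); lra.
    + destruct (IVT_interv (fun x => - f x) 1 t) as [z [Hz Ez]]; try lra.
      { intros; apply continuity_pt_opp, Hc; lra. }
      { destruct (Req_dec t 1); [subst; lra| lra]. }
      apply (Hn z); lra.
  - right. intros t Ht. assert (f 1 < 0) by (specialize (Hn 1 ltac:(lra)); lra).
    destruct (Rlt_or_le (f t) 0) as [H2|H2]; auto. exfalso.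
    assert (0 < f t) by (specialize (Hn t Ht); lra).
    destruct (Rlt_or_le t 1) as [Ht1|Ht1].
    + destruct (IVT_interv (fun x => - f x) t 1) as [z [Hz Ez]]; try lra.
      { intros; apply continuity_pt_opp, Hc; lra. }
      apply (Hn z); lra.
    + destruct (IVT_interv f 1 t) as [z [Hz Ez]]; try lra.
      { intros; apply Hc; lra. }
      { destruct (Req_dec t 1); [subst; lra| lra]. }
      apply (Hn z); lra.
Qed.

Lemma cont_eps f x : continuity_pt f x <->
  forall eps, 0 < eps -> exists del, 0 < del /\ forall y, Rabs (y - x) < del -> Rabs (f y - f x) < eps.
Proof.
  split.
  - intros H eps He. destruct (H eps He) as [alp [Ha Hb]]. exists alp; split; auto.
    intros y Hy. destruct (Req_dec y x) as [E|E].
    + subst. rewrite Rminus_diag Rabs_R0; auto.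
    + apply (Hb y). split; [split; [exact I| auto]| exact Hy].
  - intros H eps He. destruct (H eps He) as [del [Hd Hb]]. exists del; split; auto.
    intros y [_ Hy]. apply Hb. exact Hy.
Qed.

Lemma dpl_ext_loc f g x l del : 0 < del -> (forall y, Rabs (y - x) < del -> f y = g y) ->
  derivable_pt_lim f x l -> derivable_pt_lim g x l.
Proof.
  intros Hd He H eps Heps. destruct (H eps Heps) as [d Hdd].
  assert (Hm : 0 < Rmin d del) by (apply Rmin_pos; [apply cond_pos| lra]).
  exists (mkposreal _ Hm). intros hh Hh Hlt. simpl in Hlt.
  rewrite -(He (x + hh)). rewrite -(He x).
  apply Hdd; auto. apply (Rlt_le_trans _ _ _ Hlt (Rmin_l _ _)).
  rewrite Rminus_diag Rabs_R0; lra.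
  replace (x + hh - x) with hh by ring. apply (Rlt_le_trans _ _ _ Hlt (Rmin_r _ _)).
Qed.

Lemma cont_ext_loc f g x del : 0 < del -> (forall y, Rabs (y - x) < del -> f y = g y) ->
  continuity_pt f x -> continuity_pt g x.
Proof.
  intros Hd He H. apply cont_eps. intros eps Heps. move/cont_eps: H => H.
  destruct (H eps Heps) as [d [Hd' Hb]]. exists (Rmin d del); split.
  apply Rmin_pos; lra. intros y Hy.
  rewrite -(He y). rewrite -(He x). apply Hb. apply (Rlt_le_trans _ _ _ Hy (Rmin_l _ _)).
  rewrite Rminus_diag Rabs_R0; lra. apply (Rlt_le_trans _ _ _ Hy (Rmin_r _ _)).
Qed.

Lemma dpl_reflect f x l : derivable_pt_lim f (- x) l -> derivable_pt_lim (fun t => f (- t)) x (- l).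
Proof.
  intro H. apply is_derive_Reals. apply is_derive_Reals in H.
  have H2 : is_derive (fun t : R => - t) x (-1) by auto_derive; auto; ring.
  have := is_derive_comp f (fun t => - t) x l (-1) H H2.
  rewrite /scal /= /mult /=. by replace (-1 * l) with (- l) by ring.
Qed.

Lemma dpl_opp f x l : derivable_pt_lim f x l -> derivable_pt_lim (fun t => - f t) x (- l).
Proof.
  intro H. apply is_derive_Reals. apply is_derive_Reals in H.
  by apply: is_derive_opp.
Qed.

Lemma dpl_affine f x l a : derivable_pt_lim f (a - x) l -> derivable_pt_lim (fun t => f (a - t)) x (- l).
Proof.
  intro H. apply is_derive_Reals. apply is_derive_Reals in H.
  have H2 : is_derive (fun t : R => a - t) x (-1) by auto_derive; auto; ring.
  have := is_derive_comp f (fun t => a - t) x l (-1) H H2.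
  rewrite /scal /= /mult /=. by replace (-1 * l) with (- l) by ring.
Qed.

Lemma dpl_const_fun f k x : (forall y, f y = k) -> derivable_pt_lim f x 0.
Proof.
  intros H eps He. exists (mkposreal 1 Rlt_0_1). intros hh _ _.
  rewrite !H Rminus_diag /Rdiv Rmult_0_l Rminus_0_r Rabs_R0; lra.
Qed.

Lemma second_deriv_const f k t0 l : (forall y, f y = k) -> second_deriv f t0 l -> l = 0.
Proof.
  intros Hf [del [phi1 [Hd [H1 H2]]]].
  have E : forall y, Rabs (y - t0) < del -> (fun _ => 0) y = phi1 y.
  { intros y Hy. apply (uniqueness_limite f y). apply (dpl_const_fun f k y Hf). by apply H1. }
  have := dpl_ext_loc phi1 (fun _ => 0) t0 l del Hd (fun y Hy => esym (E y Hy)) H2.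
  intro H3. apply (uniqueness_limite (fun _ => 0) t0); auto.
  apply (dpl_const_fun _ 0); auto.
Qed.

Lemma second_deriv_const_intro f k t0 : (forall y, f y = k) -> second_deriv f t0 0.
Proof.
  intros Hf. exists 1, (fun _ => 0). split; [lra|split].
  - intros; apply (dpl_const_fun f k); auto.
  - apply (dpl_const_fun _ 0); auto.
Qed.

Lemma second_deriv_reflect w t0 l : second_deriv w (- t0) l -> second_deriv (fun t => w (- t)) t0 l.
Proof.
  intros [del [phi1 [Hd [H1 H2]]]]. exists del, (fun t => - phi1 (- t)). split; auto. split.
  - intros t Ht. apply dpl_reflect. apply H1. replace (- t - - t0) with (- (t - t0)) by ring.
    by rewrite Rabs_Ropp.
  - have := dpl_opp _ _ _ (dpl_reflect _ _ _ H2). by rewrite Ropp_involutive.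
Qed.

Lemma second_deriv_ext f g t0 l : (forall y, f y = g y) -> second_deriv f t0 l -> second_deriv g t0 l.
Proof.
  intros E H. have -> : g = f. { apply functional_extensionality; intro; by rewrite E. } exact H.
Qed.

Lemma bigR0 n (F : 'I_n -> R) : (forall i, F i = 0) -> \big[Rplus/0]_(i < n) F i = 0.
Proof.
  intro H. apply (big_ind (fun x => x = 0)); auto.
  intros x y -> ->; ring.
Qed.

Lemma right_deriv_unique phi t0 l1 l2 : right_deriv phi t0 l1 -> right_deriv phi t0 l2 -> l1 = l2.
Proof.
  intros H1 H2. destruct (Req_dec l1 l2) as [E|E]; auto. exfalso.
  set e := Rabs (l1 - l2) / 2. have He : 0 < e by (unfold e; apply Rdiv_lt_0_compat; [apply Rabs_pos_lt; lra| lra]).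
  destruct (H1 e He) as [d1 [Hd1 K1]]. destruct (H2 e He) as [d2 [Hd2 K2]].
  set hh := Rmin d1 d2 / 2. have Hh : 0 < hh < d1 /\ hh < d2.
  { unfold hh. have := Rmin_l d1 d2. have := Rmin_r d1 d2. have : 0 < Rmin d1 d2 by apply Rmin_pos.
    lra. }
  have A := K1 hh ltac:(lra). have B := K2 hh ltac:(lra).
  set q := (phi (t0 + hh) - phi t0) / hh in A B.
  have : Rabs (l1 - l2) <= Rabs (q - l1) + Rabs (q - l2).
  { replace (l1 - l2) with (- (q - l1) + (q - l2)) by ring.
    eapply Rle_trans; [apply Rabs_triang|]. rewrite Rabs_Ropp; lra. }
  unfold e in A, B. lra.
Qed.

Lemma dpl_lin f t l k : derivable_pt_lim f t l -> derivable_pt_lim (fun s => f s - k * s) t (l - k).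
Proof.
  intro H. apply is_derive_Reals. apply is_derive_Reals in H.
  auto_derive. by exists l. rewrite (is_derive_unique _ _ _ H). ring.
Qed.

Lemma dpl_z f t l c k : derivable_pt_lim f t l ->
  derivable_pt_lim (fun s => (f s - c) ^ 2 * exp (k * s)) t
    (2 * (f t - c) * l * exp (k * t) + (f t - c) ^ 2 * (k * exp (k * t))).
Proof.
  intro H. apply is_derive_Reals. apply is_derive_Reals in H.
  auto_derive. by exists l. rewrite (is_derive_unique _ _ _ H). ring.
Qed.

Lemma cont_z f t c k : continuity_pt f t -> continuity_pt (fun s => (f s - c) ^ 2 * exp (k * s)) t.
Proof.
  intro H. apply continuity_pt_filterlim. apply continuity_pt_filterlim in H.
  apply: (continuous_mult (fun s => (f s - c) ^ 2) (fun s => exp (k * s))).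
  - apply: (continuous_comp f (fun y => (y - c) ^ 2)); auto.
    apply continuity_pt_filterlim. apply derivable_continuous_pt.
    exists (2 * (f t - c)). apply is_derive_Reals. auto_derive; auto; ring.
  - apply continuity_pt_filterlim. apply derivable_continuous_pt.
    exists (k * exp (k * t)). apply is_derive_Reals. auto_derive; auto; ring.
Qed.

Lemma Gpos f df k C : 0 < k -> (forall t, 0 < t -> derivable_pt_lim f t (df t)) ->
  (forall t, 0 < t -> k <= df t) -> (forall t, 0 < t -> f t <= C) -> False.
Proof.
  intros Hk Hd Hge Hb.
  set T := 1 + (Rabs (C - f 1) + 1) / k.
  have HT : 1 < T. { unfold T. have := Rabs_pos (C - f 1).
    intro. have : 0 < (Rabs (C - f 1) + 1) / k by apply Rdiv_lt_0_compat; lra. lra. }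
  have := mono_le (fun s => f s - k * s) (fun s => df s - k) 1 T ltac:(lra).
  intro M. specialize (M (fun x Hx => dpl_lin _ _ _ _ (Hd x ltac:(lra)))).
  specialize (M (fun x Hx => dcont _ _ _ (dpl_lin _ _ _ k (Hd x ltac:(lra))))).
  specialize (M (fun x Hx => ltac:(have := Hge x ltac:(lra); lra))).
  have E : k * T = k * 1 + (Rabs (C - f 1) + 1) by (unfold T; field; lra).
  have := Hb T ltac:(lra). have := Rle_abs (C - f 1). lra.
Qed.

Lemma Lconc w dw h B : (forall t, 0 < t -> derivable_pt_lim w t (dw t)) ->
  (forall t, 0 < t -> derivable_pt_lim dw t (- h (w t))) ->
  (forall t, 0 < t -> 0 < h (w t)) -> (forall t, 0 < t -> B <= w t) ->
  forall t, 0 < t -> 0 <= dw t.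
Proof.
  intros H1 H2 Hh HB t1 Ht1. destruct (Rle_or_lt 0 (dw t1)) as [|Hn]; auto. exfalso.
  set T := t1 + (Rabs (w t1 - B) + 1) / (- dw t1).
  have Hq : 0 < (Rabs (w t1 - B) + 1) / (- dw t1) by (apply Rdiv_lt_0_compat; have := Rabs_pos (w t1 - B); lra).
  have HT : t1 < T by (unfold T; lra).
  have Hdec : forall t, t1 <= t -> dw t <= dw t1.
  { intros t Ht. apply (mono_ge dw (fun s => - h (w s))); auto.
    - intros; apply H2; lra.
    - intros; apply (dcont _ _ _ (H2 x ltac:(lra))).
    - intros x Hx. have := Hh x ltac:(lra). lra. }
  have := mono_ge (fun s => w s - dw t1 * s) (fun s => dw s - dw t1) t1 T ltac:(lra).
  intro M. specialize (M (fun x Hx => dpl_lin _ _ _ _ (H1 x ltac:(lra)))).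
  specialize (M (fun x Hx => dcont _ _ _ (dpl_lin _ _ _ (dw t1) (H1 x ltac:(lra))))).
  specialize (M (fun x Hx => ltac:(have := Hdec x ltac:(lra); lra))).
  have E : dw t1 * T = dw t1 * t1 - (Rabs (w t1 - B) + 1) by (unfold T; field; lra).
  have := HB T ltac:(lra). have := Rle_abs (w t1 - B). lra.
Qed.

Lemma Gneg w dw h B c eta : 0 < eta -> (forall x, continuity_pt h x) ->
  (forall t, 0 < t -> derivable_pt_lim w t (dw t)) ->
  (forall t, 0 < t -> derivable_pt_lim dw t (- h (w t))) ->
  (forall t, 0 < t -> B < w t /\ w t <= c - eta) ->
  (forall s, B < s < c -> 0 < h s) -> False.
Proof.
  intros He Hc H1 H2 Hw Hh.
  have Hpos : forall t, 0 < t -> 0 < h (w t) by (intros t Ht; destruct (Hw t Ht); apply Hh; lra).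
  have D0 := Lconc w dw h B H1 H2 Hpos (fun t Ht => Rlt_le _ _ (proj1 (Hw t Ht))).
  have Hinc : forall t, 1 <= t -> w 1 <= w t.
  { intros t Ht. apply (mono_le w dw); auto.
    - intros; apply H1; lra.
    - intros; apply (dcont _ _ _ (H1 x ltac:(lra))).
    - intros; apply D0; lra. }
  have [Hw1 Hw1'] := Hw 1 ltac:(lra).
  destruct (continuity_ab_min h (w 1) (c - eta) Hw1' (fun y _ => Hc y)) as [mx [Hmx Hmx']].
  set g := h mx. have Hg : 0 < g by (apply Hh; lra).
  set T := 1 + (Rabs (dw 1) + 1) / g.
  have Hq : 0 < (Rabs (dw 1) + 1) / g by (apply Rdiv_lt_0_compat; have := Rabs_pos (dw 1); lra).
  have HT : 1 < T by (unfold T; lra).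
  have := mono_ge (fun s => dw s - (- g) * s) (fun s => - h (w s) - - g) 1 T ltac:(lra).
  intro M. specialize (M (fun x Hx => dpl_lin _ _ _ _ (H2 x ltac:(lra)))).
  specialize (M (fun x Hx => dcont _ _ _ (dpl_lin _ _ _ (- g) (H2 x ltac:(lra))))).
  specialize (M (fun x Hx => ltac:(have := Hinc x ltac:(lra); destruct (Hw x ltac:(lra));
     intros; have := Hmx (w x) ltac:(lra); unfold g; lra))).
  have E : g * T = g + (Rabs (dw 1) + 1) by (unfold T; field; lra).
  have := D0 T ltac:(lra). have := Rle_abs (dw 1). lra.
Qed.

Lemma near0 w : continuity_pt w 0 -> forall eps, 0 < eps -> forall T, 0 < T ->
  exists s, 0 < s < T /\ Rabs (w s - w 0) < eps.
Proof.
  move/cont_eps => H eps He T HT. destruct (H eps He) as [d [Hd Hb]].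
  exists (Rmin d T / 2). have := Rmin_l d T. have := Rmin_r d T. have : 0 < Rmin d T by apply Rmin_pos.
  intros. split; [lra|]. apply Hb. rewrite Rminus_0_r Rabs_pos_eq; lra.
Qed.

Lemma grow_bound a b m : 0 <= m -> Rabs b <= m * Rabs a -> - (m * a ^ 2) <= a * b /\ a * b <= m * a ^ 2.
Proof.
  intros Hm H. destruct (Rcase_abs a) as [Ha|Ha]; destruct (Rcase_abs b) as [Hb|Hb];
  [rewrite (Rabs_left a) // (Rabs_left b) // in H|rewrite (Rabs_left a) // (Rabs_right b) // in H
  |rewrite (Rabs_right a) // (Rabs_left b) // in H|rewrite (Rabs_right a) // (Rabs_right b) // in H];
  split; nra.
Qed.

Lemma Nohit w dw c m : (forall t, 0 < t -> derivable_pt_lim w t (dw t)) ->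
  (forall t, 0 <= t -> continuity_pt w t) -> 0 <= m ->
  (forall t, 0 < t -> Rabs (dw t) <= m * Rabs (w t - c)) -> w 0 <> c ->
  forall t1, 0 < t1 -> w t1 <> c.
Proof.
  intros H1 Hc Hm H3 H0 t1 Ht1 E.
  have Z : forall s, 0 < s < t1 -> w s = c.
  { intros s Hs.
    have := mono_le (fun s => (w s - c) ^ 2 * exp (2 * m * s))
      (fun x => 2 * (w x - c) * dw x * exp (2 * m * x) + (w x - c) ^ 2 * (2 * m * exp (2 * m * x))) s t1 ltac:(lra).
    intro M. specialize (M (fun x Hx => dpl_z _ _ _ _ _ (H1 x ltac:(lra)))).
    specialize (M (fun x Hx => cont_z _ _ _ _ (Hc x ltac:(lra)))).
    have M2 : (w s - c) ^ 2 * exp (2 * m * s) <= (w t1 - c) ^ 2 * exp (2 * m * t1).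
    { apply M. intros x Hx. have := grow_bound (w x - c) (dw x) m Hm (H3 x ltac:(lra)).
      have := exp_pos (2 * m * x). intros. nra. }
    rewrite E Rminus_diag in M2. have := exp_pos (2 * m * s).
    intro. have : (w s - c) ^ 2 <= 0 by nra. intro. nra. }
  have Hpos : 0 < Rabs (w 0 - c) by (apply Rabs_pos_lt; lra).
  destruct (near0 w (Hc 0 (Rle_refl 0)) _ Hpos t1 Ht1) as [s [Hs Hs']].
  rewrite (Z s Hs) in Hs'. rewrite -Rabs_Ropp in Hs'. replace (- (c - w 0)) with (w 0 - c) in Hs' by ring. lra.
Qed.

Lemma K1 w dw h P c m B :
  (forall t, 0 < t -> derivable_pt_lim w t (dw t)) ->
  (forall t, 0 < t -> derivable_pt_lim dw t (- h (w t))) ->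
  (forall t, 0 <= t -> continuity_pt w t) ->
  (forall t, 0 < t -> dw t ^ 2 = 2 * P (w t)) ->
  0 <= m -> (forall t, 0 < t -> Rabs (dw t) <= m * Rabs (w t - c)) ->
  (forall t, 0 < t -> w t <> c -> 0 < P (w t)) ->
  (forall t, 0 < t -> w t < c -> 0 < h (w t)) ->
  (forall t, 0 < t -> B <= w t) -> w 0 < c ->
  forall t, 0 < t -> w 0 < w t /\ w t < c /\ dw t = sqrt (2 * P (w t)).
Proof.
  intros H1a H1b H1c H2 Hm H3 H4 H5 H6 Hw0.
  have NH := Nohit w dw c m H1a H1c Hm H3 ltac:(lra).
  have Hlt : forall t, 0 < t -> w t < c.
  { destruct (sign_const (fun t => w t - c)) as [A|A].
    - intros t Ht. apply continuity_pt_minus. apply (dcont _ _ _ (H1a t Ht)). apply continuity_pt_const. intros ? ?; auto.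
    - intros t Ht. have := NH t Ht. lra.
    - exfalso. have Hpos : 0 < c - w 0 by lra.
      destruct (near0 w (H1c 0 (Rle_refl 0)) _ Hpos 1 Rlt_0_1) as [s [Hs Hs']].
      have := A s ltac:(lra). have := Rle_abs (w s - w 0). lra.
    - intros t Ht; have := A t Ht; lra. }
  have Hdpos : forall t, 0 < t -> 0 < dw t.
  { destruct (sign_const dw) as [A|A]; auto.
    - intros t Ht; apply (dcont _ _ _ (H1b t Ht)).
    - intros t Ht E. have := H4 t Ht (Rlt_not_eq _ _ (Hlt t Ht)). have Q := H2 t Ht. rewrite E in Q. nra.
    - exfalso. have := Lconc w dw h B H1a H1b (fun t Ht => H5 t Ht (Hlt t Ht)) H6 1 Rlt_0_1.
      have := A 1 Rlt_0_1. lra. }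
  intros t Ht. split; [|split; auto].
  - apply (mono_lt w dw 0 t Ht); auto.
    + intros; apply H1a; lra.
    + intros; apply H1c; lra.
    + intros; apply Hdpos; lra.
  - rewrite -(H2 t Ht). rewrite sqrt_pow2 //. have := Hdpos t Ht. lra.
Qed.

Lemma K1eq w dw c m :
  (forall t, 0 < t -> derivable_pt_lim w t (dw t)) ->
  (forall t, 0 <= t -> continuity_pt w t) ->
  0 <= m -> (forall t, 0 < t -> Rabs (dw t) <= m * Rabs (w t - c)) -> w 0 = c ->
  forall t, 0 <= t -> w t = c.
Proof.
  intros H1 Hc Hm H3 H0 t Ht. destruct (Rle_lt_or_eq_dec _ _ Ht) as [Ht'|Ht']; [|by subst].
  have := mono_ge (fun s => (w s - c) ^ 2 * exp ((- 2 * m) * s))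
      (fun x => 2 * (w x - c) * dw x * exp ((- 2 * m) * x) + (w x - c) ^ 2 * ((- 2 * m) * exp ((- 2 * m) * x))) 0 t Ht.
  intro M. specialize (M (fun x Hx => dpl_z _ _ _ _ _ (H1 x ltac:(lra)))).
  specialize (M (fun x Hx => cont_z _ _ _ _ (Hc x ltac:(lra)))).
  have M2 : (w t - c) ^ 2 * exp ((- 2 * m) * t) <= (w 0 - c) ^ 2 * exp ((- 2 * m) * 0).
  { apply M. intros x Hx. have := grow_bound (w x - c) (dw x) m Hm (H3 x ltac:(lra)).
    have := exp_pos ((- 2 * m) * x). intros. nra. }
  rewrite H0 Rminus_diag in M2. have := exp_pos ((- 2 * m) * t).
  intro. have : (w t - c) ^ 2 <= 0 by nra. intro. nra.
Qed.

Lemma RD w k : (forall t, 0 <= t -> continuity_pt w t) ->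
  (forall t, 0 < t -> derivable_pt_lim w t (k (w t))) -> continuity_pt k (w 0) ->
  right_deriv w 0 (k (w 0)).
Proof.
  intros Hc Hd Hk eps He. move/cont_eps: Hk => Hk. destruct (Hk eps He) as [d1 [Hd1 K1]].
  move/cont_eps: (Hc 0 (Rle_refl 0)) => H0. destruct (H0 d1 Hd1) as [d2 [Hd2 K2]].
  exists d2. split; auto. intros hh Hh. rewrite Rplus_0_l.
  destruct (mvt_open w (fun t => k (w t)) 0 hh ltac:(lra)) as [z [Hz E]].
  - intros; apply Hd; lra.
  - intros; apply Hc; lra.
  - rewrite E Rminus_0_r. replace (k (w z) * hh / hh) with (k (w z)) by (field; lra).
    apply K1. apply K2. rewrite Rminus_0_r Rabs_pos_eq; lra.
Qed.

Definition psi (P : R -> R) (s : R) := sqrt (2 * P s).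
Definition kk (P : R -> R) (a s : R) := / psi P (Rmax a s).
Definition Phi (P : R -> R) (a s : R) := RInt (kk P a) a s.

Lemma cont_Rmax a x : continuity_pt (fun s => Rmax a s) x.
Proof.
  apply cont_eps. intros eps He. exists eps; split; auto. intros y Hy.
  unfold Rmax; destruct (Rle_dec a y); destruct (Rle_dec a x);
  rewrite /Rabs; repeat destruct Rcase_abs; rewrite /Rabs in Hy; repeat destruct Rcase_abs in Hy; lra.
Qed.

Lemma loc_of_abs (Q : R -> Prop) x del : 0 < del -> (forall y, Rabs (y - x) < del -> Q y) -> locally x Q.
Proof. intros Hd H. exists (mkposreal _ Hd). intros y Hy. apply H. apply Hy. Qed.

Lemma cont_to_cont f x : continuity_pt f x -> continuous f x.
Proof. intro H. by apply continuity_pt_filterlim. Qed.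

Lemma psi_cont P x : (forall x, continuity_pt P x) -> 0 < P x -> continuity_pt (psi P) x.
Proof.
  intros HP Hx. apply continuity_pt_filterlim. rewrite /psi.
  apply: (continuous_comp (fun s => 2 * P s) sqrt).
  - apply: (continuous_scal_r 2 P). apply cont_to_cont; auto.
  - apply cont_to_cont. apply continuity_pt_sqrt. lra.
Qed.

Lemma kk_cont P a c s : (forall x, continuity_pt P x) -> (forall s, a <= s < c -> 0 < P s) -> a < c -> s < c ->
  continuity_pt (kk P a) s.
Proof.
  intros HP Hpos Hac Hs. rewrite /kk.
  have Hm : a <= Rmax a s < c by (split; [apply Rmax_l| apply Rmax_lub_lt; lra]).
  apply (continuity_pt_inv (fun s => psi P (Rmax a s))).
  - apply (continuity_pt_comp (fun s => Rmax a s) (psi P)). apply cont_Rmax.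
    apply psi_cont; auto.
  - rewrite /psi. apply Rgt_not_eq. apply sqrt_lt_R0. have := Hpos _ Hm. lra.
Qed.

Lemma kk_pos P a c s : (forall s, a <= s < c -> 0 < P s) -> a < c -> s < c -> 0 < kk P a s.
Proof.
  intros Hpos Hac Hs. rewrite /kk /psi.
  have Hm : a <= Rmax a s < c by (split; [apply Rmax_l| apply Rmax_lub_lt; lra]).
  apply Rinv_0_lt_compat. apply sqrt_lt_R0. have := Hpos _ Hm. lra.
Qed.

Lemma Phi_deriv P a c s : (forall x, continuity_pt P x) -> (forall s, a <= s < c -> 0 < P s) -> a < c -> s < c ->
  derivable_pt_lim (Phi P a) s (kk P a s).
Proof.
  intros HP Hpos Hac Hs. apply is_derive_Reals. rewrite /Phi.
  apply: is_derive_RInt.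
  - apply (loc_of_abs _ s ((c - s) / 2)). lra. intros y Hy.
    have HH : ex_RInt (kk P a) a y.
    2: exact (RInt_correct _ _ _ HH).
    apply: ex_RInt_continuous. intros z Hz. apply cont_to_cont.
    apply (kk_cont P a c z); auto.
    have := Rmax_lub_lt a y c Hac. have : y < c by (have := Rle_abs (y - s); lra). intros H1 H2.
    have := H2 H1. have := Rmax_r a y. lra.
  - apply cont_to_cont. apply (kk_cont P a c s); auto.
Qed.

Lemma Phi_a P a : Phi P a a = 0.
Proof. rewrite /Phi RInt_point. reflexivity. Qed.

Lemma Phi_cont P a c s : (forall x, continuity_pt P x) -> (forall s, a <= s < c -> 0 < P s) -> a < c -> s < c ->
  continuity_pt (Phi P a) s.
Proof. intros. apply (dcont _ _ _ (Phi_deriv P a c s H H0 H1 H2)). Qed.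

Lemma Phi_incr P a c x y : (forall x, continuity_pt P x) -> (forall s, a <= s < c -> 0 < P s) -> a < c ->
  x < y -> y < c -> Phi P a x < Phi P a y.
Proof.
  intros HP Hpos Hac Hxy Hy. apply (mono_lt _ (kk P a)); auto.
  - intros; apply (Phi_deriv P a c); auto; lra.
  - intros; apply (Phi_cont P a c); auto; lra.
  - intros; apply (kk_pos P a c); auto; lra.
Qed.

Lemma kk_lower P a c M x : (forall s, a <= s < c -> 0 < P s) -> 0 < M ->
  (forall s, a <= s <= c -> P s <= M * (s - c) ^ 2) -> a <= x < c ->
  / sqrt (2 * M) * / (c - x) <= kk P a x.
Proof.
  intros Hpos HM Hb Hx. rewrite /kk /psi Rmax_right; [|lra].
  rewrite -Rinv_mult. apply Rinv_le_contravar. apply sqrt_lt_R0. have := Hpos x Hx. lra.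
  have E : sqrt (2 * M) * (c - x) = sqrt (2 * M * (x - c) ^ 2).
  { rewrite (sqrt_mult (2 * M) ((x - c) ^ 2)); try nra. replace ((x - c) ^ 2) with ((c - x) ^ 2) by ring.
    rewrite sqrt_pow2 //. lra. }
  rewrite E. apply sqrt_le_1_alt. have := Hb x ltac:(lra). lra.
Qed.

Lemma Phi_lower P a c M s : (forall x, continuity_pt P x) -> (forall s, a <= s < c -> 0 < P s) -> a < c -> 0 < M ->
  (forall s, a <= s <= c -> P s <= M * (s - c) ^ 2) -> a <= s < c ->
  / sqrt (2 * M) * (ln (c - a) - ln (c - s)) <= Phi P a s.
Proof.
  intros HP Hpos Hac HM Hb Hs.
  set k := / sqrt (2 * M).
  have Hd : forall x, x < c -> derivable_pt_lim (fun x => Phi P a x + k * ln (c - x)) x (kk P a x + k * (- / (c - x))).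
  { intros x Hx. have H := Phi_deriv P a c x HP Hpos Hac Hx. apply is_derive_Reals. apply is_derive_Reals in H.
    auto_derive. split. by exists (kk P a x). split; auto. lra.
    rewrite (is_derive_unique _ _ _ H). field. lra. }
  have := mono_le _ _ a s (proj1 Hs) (fun x Hx => Hd x ltac:(lra)) (fun x Hx => dcont _ _ _ (Hd x ltac:(lra))).
  intro M'. have : Phi P a a + k * ln (c - a) <= Phi P a s + k * ln (c - s).
  { apply M'. intros x Hx. have := kk_lower P a c M x Hpos HM Hb ltac:(lra). unfold k. lra. }
  rewrite Phi_a. lra.
Qed.

Lemma Phi_reach P a c M t : (forall x, continuity_pt P x) -> (forall s, a <= s < c -> 0 < P s) -> a < c -> 0 < M ->
  (forall s, a <= s <= c -> P s <= M * (s - c) ^ 2) -> 0 <= t ->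
  exists s, a <= s < c /\ Phi P a s = t.
Proof.
  intros HP Hpos Hac HM Hb Ht. destruct (Rle_lt_or_eq_dec _ _ Ht) as [Ht'|Ht']; [| exists a; split; [lra| subst; apply Phi_a]].
  set k := / sqrt (2 * M). have Hk : 0 < k by (apply Rinv_0_lt_compat, sqrt_lt_R0; lra).
  set st := c - (c - a) * exp (- (t + 1) / k).
  have He : 0 < exp (- (t + 1) / k) < 1.
  { split. apply exp_pos. apply (Rlt_le_trans _ (exp 0)); [apply exp_increasing| rewrite exp_0; lra].
    have : 0 < (t + 1) / k by apply Rdiv_lt_0_compat; lra. intros. replace (- (t + 1) / k) with (- ((t + 1) / k)) by (field; lra). lra. }
  have Hst : a < st < c by (unfold st; nra).
  have Hl := Phi_lower P a c M st HP Hpos Hac HM Hb ltac:(lra).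
  have E : ln (c - a) - ln (c - st) = (t + 1) / k.
  { rewrite /st. replace (c - (c - (c - a) * exp (- (t + 1) / k))) with ((c - a) * exp (- (t + 1) / k)) by ring.
    rewrite ln_mult; [|lra|lra]. rewrite ln_exp. rewrite /Rdiv. ring. }
  rewrite E in Hl. fold k in Hl. replace (k * ((t + 1) / k)) with (t + 1) in Hl by (field; lra).
  destruct (IVT_interv (fun s => Phi P a s - t) a st) as [z [Hz Ez]].
  - intros; apply continuity_pt_minus. apply (Phi_cont P a c); auto; lra. apply continuity_pt_const; intros ? ?; auto.
  - lra.
  - rewrite Phi_a; lra.
  - lra.
  - exists z. split; [lra| lra].
Qed.

Definition FH (h P : R -> R) (a c M : R) : Prop :=
  a < c /\ (forall x, continuity_pt h x) /\ (forall x, derivable_pt_lim P x (- h x)) /\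
  (forall s, a <= s < c -> 0 < P s) /\ 0 < M /\ (forall s, a <= s <= c -> P s <= M * (s - c) ^ 2).

Lemma Phi_inj P a c x y : (forall x, continuity_pt P x) -> (forall s, a <= s < c -> 0 < P s) -> a < c ->
  x < c -> y < c -> Phi P a x = Phi P a y -> x = y.
Proof.
  intros HP Hpos Hac Hx Hy E. destruct (Rtotal_order x y) as [H|[H|H]]; auto.
  - have := Phi_incr P a c x y HP Hpos Hac H Hy. lra.
  - have := Phi_incr P a c y x HP Hpos Hac H Hx. lra.
Qed.

Lemma Phi_le P a c x y : (forall x, continuity_pt P x) -> (forall s, a <= s < c -> 0 < P s) -> a < c ->
  x < c -> y < c -> Phi P a x <= Phi P a y -> x <= y.
Proof.
  intros HP Hpos Hac Hx Hy E. destruct (Rle_or_lt x y) as [H|H]; auto.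
  have := Phi_incr P a c y x HP Hpos Hac H Hx. lra.
Qed.

Lemma flow h P a c M : FH h P a c M ->
  exists W : R -> R, W 0 = a /\ (forall t, 0 <= t -> a <= W t < c) /\
    (forall t, 0 <= t -> continuity_pt W t) /\
    (forall t, 0 < t -> derivable_pt_lim W t (psi P (W t))) /\
    (forall t, 0 < t -> derivable_pt_lim (fun s => psi P (W s)) t (- h (W t))).
Proof.
  intros [Hac [Hh [HdP [Hpos [HM Hb]]]]].
  have HP : forall x, continuity_pt P x by (intro x; apply (dcont _ _ _ (HdP x))).
  have exW : forall t, exists s, (0 <= t -> a <= s < c /\ Phi P a s = t) /\ (t < 0 -> s = a).
  { intro t. destruct (Rle_or_lt 0 t) as [Ht|Ht].
    - destruct (Phi_reach P a c M t HP Hpos Hac HM Hb Ht) as [s Hs]. exists s; split; auto; lra.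
    - exists a; split; auto; lra. }
  set W := fun t => proj1_sig (constructive_indefinite_description _ (exW t)).
  have HW : forall t, (0 <= t -> a <= W t < c /\ Phi P a (W t) = t) /\ (t < 0 -> W t = a).
  { intro t. exact (proj2_sig (constructive_indefinite_description _ (exW t))). }
  have HW1 : forall t, 0 <= t -> a <= W t < c by (intros t Ht; apply (HW t); auto).
  have HW2 : forall t, 0 <= t -> Phi P a (W t) = t by (intros t Ht; apply (HW t); auto).
  have HW3 : forall t, t < 0 -> W t = a by (intros t Ht; apply (HW t); auto).
  have HW0 : W 0 = a.
  { apply (Phi_inj P a c); auto. apply HW1; lra. rewrite HW2; [|lra]. by rewrite Phi_a. }
  have Hmono : forall x y, 0 <= x -> x <= y -> W x <= W y.
  { intros x y Hx Hxy. apply (Phi_le P a c); auto. apply HW1; lra. apply HW1; lra.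
    rewrite !HW2; lra. }
  have Hcont : forall t, 0 <= t -> continuity_pt W t.
  { intros t Ht. destruct (Rle_lt_or_eq_dec _ _ Ht) as [Ht'|Ht'].
    - destruct (Phi_reach P a c M (t + 1) HP Hpos Hac HM Hb ltac:(lra)) as [ub [Hub Eub]].
      have Hlu : a < ub. { destruct (Rle_lt_or_eq_dec _ _ (proj1 Hub)) as [|E]; auto. rewrite -E Phi_a in Eub. lra. }
      apply (continuity_pt_recip_interv (Phi P a) W a ub Hlu).
      + intros x y Hx Hxy Hy. apply (Phi_incr P a c); auto; lra.
      + intros x Hx Hy. rewrite Phi_a in Hx. rewrite /comp. change (Phi P a (W x) = x). apply HW2; lra.
      + intros x Hx Hy. rewrite Phi_a in Hx. split. apply HW1; lra.
        apply (Phi_le P a c); auto. apply HW1; lra. lra. rewrite HW2; lra.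
      + intros; apply (Phi_cont P a c); auto; lra.
      + rewrite Phi_a Eub. lra.
    - subst t. apply cont_eps. intros eps He.
      set s1 := Rmin (a + eps / 2) ((a + c) / 2).
      have Hs1 : a < s1 < c by (unfold s1; have := Rmin_l (a + eps / 2) ((a + c) / 2);
         have := Rmin_r (a + eps / 2) ((a + c) / 2); intros; split; [apply Rmin_glb_lt|]; lra).
      have Hd : 0 < Phi P a s1 by (rewrite -(Phi_a P a); apply (Phi_incr P a c); auto; lra).
      exists (Phi P a s1). split; auto. intros y Hy. rewrite HW0.
      destruct (Rlt_or_le y 0) as [Hy0|Hy0].
      + rewrite HW3 // Rminus_diag Rabs_R0. lra.
      + rewrite Rminus_0_r Rabs_pos_eq in Hy; [|lra].
        have : W y <= s1. { apply (Phi_le P a c); auto. apply HW1; lra. lra. rewrite HW2; lra. }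
        have := HW1 y Hy0. have := Rmin_l (a + eps / 2) ((a + c) / 2). fold s1. intros.
        rewrite Rabs_pos_eq; lra. }
  have Hder : forall t, 0 < t -> derivable_pt_lim W t (psi P (W t)).
  { intros t Ht.
    have Prf : forall y, W (t / 2) <= y <= W (t + 1) -> derivable_pt (Phi P a) y.
    { intros y Hy. exists (kk P a y). apply (Phi_deriv P a c); auto. have := HW1 (t + 1) ltac:(lra). lra. }
    have Hi : W (t / 2) <= W t <= W (t + 1) by (split; apply Hmono; lra).
    have := derivable_pt_lim_recip_interv (Phi P a) W (t / 2) (t + 1) t Prf (Hcont t ltac:(lra))
      ltac:(lra) ltac:(lra) Hi.
    rewrite (derive_pt_eq_0 _ _ (kk P a (W t)) (Prf (W t) Hi)).
    2: { apply (Phi_deriv P a c); auto. apply HW1; lra. }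
    intro K. have HK := kk_pos P a c (W t) Hpos Hac (proj2 (HW1 t ltac:(lra))).
    have : derivable_pt_lim W t (1 / kk P a (W t)).
    { apply K. intros x Hx. rewrite /comp. change (Phi P a (W x) = x). apply HW2; lra. lra. }
    rewrite /kk Rmax_right. 2: apply HW1; lra.
    rewrite /Rdiv Rmult_1_l Rinv_inv. auto. }
  exists W. split; auto. split; auto. split; auto. split; auto.
  intros t Ht. have H := Hder t Ht. have HP' := HdP (W t).
  have Hp : 0 < P (W t) by (apply Hpos, HW1; lra).
  apply is_derive_Reals. apply is_derive_Reals in H. apply is_derive_Reals in HP'.
  rewrite /psi. auto_derive.
  - split. by exists (- h (W t)). split. by exists (psi P (W t)). split; auto. lra.
  - rewrite (is_derive_unique _ _ _ H) (is_derive_unique _ _ _ HP') /psi.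
    have := sqrt_lt_R0 (2 * P (W t)) ltac:(lra). intro. field. lra.
Qed.

Lemma Phi_along h P a c M w : FH h P a c M ->
  (forall t, 0 < t -> derivable_pt_lim w t (psi P (w t))) ->
  (forall t, 0 <= t -> continuity_pt w t) -> w 0 = a -> (forall t, 0 <= t -> a <= w t < c) ->
  forall t, 0 <= t -> Phi P a (w t) = t.
Proof.
  intros [Hac [Hh [HdP [Hpos [HM Hb]]]]] Hd Hc H0 Hr t Ht.
  have HP : forall x, continuity_pt P x by (intro x; apply (dcont _ _ _ (HdP x))).
  destruct (Rle_lt_or_eq_dec _ _ Ht) as [Ht'|Ht']; [| rewrite -Ht' H0; apply Phi_a].
  have D : forall s, 0 < s -> derivable_pt_lim (fun s => Phi P a (w s)) s 1.
  { intros s Hs. have H1 := Hd s Hs. have H2 := Phi_deriv P a c (w s) HP Hpos Hac (proj2 (Hr s ltac:(lra))).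
    have := derivable_pt_lim_comp w (Phi P a) s _ _ H1 H2. rewrite /comp.
    rewrite /kk Rmax_right. 2: apply Hr; lra.
    have Hp : 0 < psi P (w s) by (apply sqrt_lt_R0; have := Hpos (w s) (Hr s ltac:(lra)); lra).
    by rewrite Rinv_l; [|lra]. }
  destruct (mvt_open (fun s => Phi P a (w s)) (fun _ => 1) 0 t Ht') as [z [Hz E]].
  - intros; apply D; lra.
  - intros x Hx. apply (continuity_pt_comp w (Phi P a)). apply Hc; lra.
    apply (Phi_cont P a c); auto. apply Hr; lra.
  - rewrite H0 Phi_a in E. lra.
Qed.

Lemma flow_uniq h P a c M w1 w2 : FH h P a c M ->
  (forall t, 0 < t -> derivable_pt_lim w1 t (psi P (w1 t))) ->
  (forall t, 0 <= t -> continuity_pt w1 t) -> w1 0 = a -> (forall t, 0 <= t -> a <= w1 t < c) ->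
  (forall t, 0 < t -> derivable_pt_lim w2 t (psi P (w2 t))) ->
  (forall t, 0 <= t -> continuity_pt w2 t) -> w2 0 = a -> (forall t, 0 <= t -> a <= w2 t < c) ->
  forall t, 0 <= t -> w1 t = w2 t.
Proof.
  intros HF. have HF' := HF. destruct HF' as [Hac [Hh [HdP [Hpos [HM Hb]]]]].
  have HP : forall x, continuity_pt P x by (intro x; apply (dcont _ _ _ (HdP x))).
  intros A1 A2 A3 A4 B1 B2 B3 B4 t Ht.
  apply (Phi_inj P a c); auto. apply A4; auto. apply B4; auto.
  rewrite (Phi_along h P a c M w1) // (Phi_along h P a c M w2) //.
Qed.

Definition Hcore (h P : R -> R) (c : R) : Prop :=
  0 < c /\ (forall x, continuity_pt h x) /\ h c = 0 /\ (forall s, 0 < s < c -> 0 < h s) /\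
  (forall s, c < s -> h s < 0) /\
  (forall A B, exists L, 0 < L /\ forall s, A <= s <= B -> Rabs (h s) <= L * Rabs (s - c)) /\
  (forall x, derivable_pt_lim P x (- h x)) /\ P c = 0.

Lemma Ppos h P c s : Hcore h P c -> 0 <= s -> s <> c -> 0 < P s.
Proof.
  intros [Hc [Hh [Hhc [Hp [Hn [HL [HdP HPc]]]]]]] Hs Hsc.
  destruct (Rlt_or_le s c) as [H|H].
  - have := mono_gt P (fun x => - h x) s c H (fun x _ => HdP x) (fun x _ => dcont _ _ _ (HdP x)).
    intro M. rewrite HPc in M. apply M. intros x Hx. have := Hp x ltac:(lra). lra.
  - have := mono_lt P (fun x => - h x) c s ltac:(lra) (fun x _ => HdP x) (fun x _ => dcont _ _ _ (HdP x)).
    intro M. rewrite HPc in M. apply M. intros x Hx. have := Hn x ltac:(lra). lra.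
Qed.

Lemma Pnn h P c s : Hcore h P c -> 0 <= s -> 0 <= P s.
Proof.
  intros H Hs. destruct (Req_dec s c) as [E|E].
  - subst. destruct H as [_ [_ [_ [_ [_ [_ [_ HPc]]]]]]]. lra.
  - have := Ppos h P c s H Hs E. lra.
Qed.

Lemma Pquad h P c A B : Hcore h P c -> A <= c <= B ->
  exists M, 0 < M /\ forall s, A <= s <= B -> P s <= M * (s - c) ^ 2.
Proof.
  intros [Hc [Hh [Hhc [Hp [Hn [HL [HdP HPc]]]]]]] HAB.
  destruct (HL A B) as [L [HL0 HLb]]. exists (L / 2). split; [lra|].
  have D : forall x, derivable_pt_lim (fun s => L / 2 * (s - c) ^ 2 - P s) x (L * (x - c) + h x).
  { intro x. have H := HdP x. apply is_derive_Reals. apply is_derive_Reals in H. auto_derive.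
    by exists (- h x). rewrite (is_derive_unique _ _ _ H). field. }
  intros s Hs. destruct (Rle_or_lt c s) as [H|H].
  - have := mono_le _ _ c s H (fun x _ => D x) (fun x _ => dcont _ _ _ (D x)).
    rewrite HPc. intro M. have : 0 <= L / 2 * (s - c) ^ 2 - P s.
    { replace 0 with (L / 2 * (c - c) ^ 2 - 0) by ring. apply M.
      intros x Hx. have := HLb x ltac:(lra). rewrite (Rabs_pos_eq (x - c)); [|lra].
      have := Rle_abs (h x). intros. have := Rabs_Ropp (h x). have := Rle_abs (- h x). lra. }
    lra.
  - have := mono_ge _ _ s c (Rlt_le _ _ H) (fun x _ => D x) (fun x _ => dcont _ _ _ (D x)).
    rewrite HPc. intro M. have : 0 <= L / 2 * (s - c) ^ 2 - P s.
    { replace 0 with (L / 2 * (c - c) ^ 2 - 0) by ring. apply M.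
      intros x Hx. have := HLb x ltac:(lra). rewrite (Rabs_left (x - c)); [|lra].
      have := Rle_abs (h x). lra. }
    lra.
Qed.

Lemma dpl_kminus f t l k : derivable_pt_lim f t l -> derivable_pt_lim (fun s => k - f s) t (- l).
Proof.
  intro H. apply is_derive_Reals. apply is_derive_Reals in H. auto_derive. by exists l.
  rewrite (is_derive_unique _ _ _ H). ring.
Qed.

Lemma const_of_deriv0 E : (forall t, 0 < t -> derivable_pt_lim E t 0) -> forall t, 0 < t -> E t = E 1.
Proof.
  intros H t Ht. destruct (Rtotal_order t 1) as [Hl|[He|Hg]].
  - destruct (mvt_open E (fun _ => 0) t 1 Hl) as [z [_ Ez]].
    + intros; apply H; lra.
    + intros; apply (dcont _ _ _ (H x ltac:(lra))).
    + lra.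
  - by subst.
  - destruct (mvt_open E (fun _ => 0) 1 t Hg) as [z [_ Ez]].
    + intros; apply H; lra.
    + intros; apply (dcont _ _ _ (H x ltac:(lra))).
    + lra.
Qed.

Lemma energy h P c w dw C : Hcore h P c ->
  (forall t, 0 < t -> derivable_pt_lim w t (dw t)) ->
  (forall t, 0 < t -> derivable_pt_lim dw t (- h (w t))) ->
  (forall t, 0 < t -> 0 < w t) -> (forall t, 0 < t -> w t <= C) ->
  forall t, 0 < t -> dw t ^ 2 = 2 * P (w t).
Proof.
  intros HC H1 H2 Hp HCb. have HC' := HC. destruct HC' as [Hc [Hh [Hhc [Hhp [Hhn [HL [HdP HPc]]]]]]].
  set E := fun t => dw t ^ 2 / 2 - P (w t).
  have HE : forall t, 0 < t -> derivable_pt_lim E t 0.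
  { intros t Ht. have A1 := H1 t Ht. have A2 := H2 t Ht. have A3 := HdP (w t).
    apply is_derive_Reals. apply is_derive_Reals in A1. apply is_derive_Reals in A2. apply is_derive_Reals in A3.
    rewrite /E. auto_derive.
    - split. by exists (- h (w t)). split. by exists (- h (w t)). split; auto. by exists (dw t).
    - rewrite (is_derive_unique _ _ _ A1) (is_derive_unique _ _ _ A2) (is_derive_unique _ _ _ A3). field. }
  have Ec := const_of_deriv0 E HE.
  set K := E 1.
  have Hdw : forall t, 0 < t -> dw t ^ 2 = 2 * P (w t) + 2 * K.
  { intros t Ht. have := Ec t Ht. rewrite /K /E /=. intros. nra. }
  have Hwc : forall t, 0 < t -> continuity_pt w t by (intros t Ht; apply (dcont _ _ _ (H1 t Ht))).
  destruct (Rtotal_order K 0) as [HK|[HK|HK]].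
  -
    exfalso.
    destruct ((proj1 (cont_eps P c)) (dcont _ _ _ (HdP c)) (- K) ltac:(lra)) as [del [Hdel Hb]].
    have Far : forall t, 0 < t -> del <= Rabs (w t - c).
    { intros t Ht. destruct (Rle_or_lt del (Rabs (w t - c))) as [|Hlt]; auto. exfalso.
      have := Hb (w t) Hlt. rewrite HPc Rminus_0_r. have := Hdw t Ht. have := pow2_ge_0 (dw t).
      have := Rle_abs (P (w t)). lra. }
    destruct (sign_const (fun t => w t - c)) as [A|A].
    + intros t Ht. apply continuity_pt_minus; auto. apply continuity_pt_const; intros ? ?; auto.
    + intros t Ht E0. have := Far t Ht. rewrite E0 Rabs_R0. lra.
    +
      apply (Gneg (fun t => 2 * c - w t) (fun t => - dw t) (fun s => - h (2 * c - s)) (2 * c - C - 1) c del Hdel).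
      * intro x. apply continuity_pt_opp. apply (continuity_pt_comp (fun s => 2 * c - s) h); auto.
        apply continuity_pt_minus. apply continuity_pt_const; intros ? ?; auto. apply continuity_pt_id.
      * intros t Ht. apply dpl_kminus; auto.
      * intros t Ht. replace (2 * c - (2 * c - w t)) with (w t) by ring.
        replace (- - h (w t)) with (- - h (w t)) by ring. apply dpl_opp. apply H2; auto.
      * intros t Ht. have := A t Ht. have := Far t Ht. have := HCb t Ht.
        rewrite Rabs_pos_eq; [|have := A t Ht; lra]. lra.
      * intros s Hs. have := Hhn (2 * c - s) ltac:(lra). lra.
    + apply (Gneg w dw h 0 c del Hdel Hh H1 H2).
      * intros t Ht. have := A t Ht. have := Far t Ht. have := Hp t Ht.
        rewrite Rabs_left; [|have := A t Ht; lra]. lra.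
      * intros s Hs; apply Hhp; lra.
  - intros t Ht. rewrite Hdw // HK. ring.
  - exfalso. have Hsq : 0 < sqrt (2 * K) by apply sqrt_lt_R0; lra.
    have Hge : forall t, 0 < t -> 2 * K <= dw t ^ 2.
    { intros t Ht. rewrite Hdw //. have := Pnn h P c (w t) HC ltac:(have := Hp t Ht; lra). lra. }
    destruct (sign_const dw) as [A|A].
    + intros t Ht. apply (dcont _ _ _ (H2 t Ht)).
    + intros t Ht E0. have := Hge t Ht. rewrite E0. lra.
    + apply (Gpos w dw (sqrt (2 * K)) C Hsq H1); auto.
      intros t Ht. rewrite -(sqrt_pow2 (dw t)). apply sqrt_le_1_alt. apply Hge; auto.
      have := A t Ht; lra.
    + apply (Gpos (fun t => - w t) (fun t => - dw t) (sqrt (2 * K)) 0 Hsq).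
      * intros t Ht. apply dpl_opp; auto.
      * intros t Ht. rewrite -(sqrt_pow2 (- dw t)). apply sqrt_le_1_alt.
        replace ((- dw t) ^ 2) with (dw t ^ 2) by ring. apply Hge; auto.
        have := A t Ht; lra.
      * intros t Ht. have := Hp t Ht. lra.
Qed.

Definition sol2 (h w : R -> R) : Prop :=
  (forall t, 0 < t -> second_deriv w t (- h (w t))) /\
  (forall eps, 0 < eps -> exists del, 0 < del /\ forall t, 0 <= t < del -> Rabs (w t - w 0) < eps) /\
  (forall t, 0 <= t -> 0 < w t) /\ (exists C, forall t, 0 <= t -> w t <= C).

Definition wext (w : R -> R) := fun t => w (Rmax 0 t).

Lemma sol2_ext h w : sol2 h w ->
  (forall t, 0 < t -> derivable_pt_lim (wext w) t (Derive w t)) /\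
  (forall t, 0 < t -> derivable_pt_lim (Derive w) t (- h (wext w t))) /\
  (forall t, 0 <= t -> continuity_pt (wext w) t) /\
  (forall t, 0 <= t -> wext w t = w t).
Proof.
  intros [H1 [H2 [H3 H4]]].
  have Eq : forall t, 0 <= t -> wext w t = w t by (intros t Ht; rewrite /wext Rmax_right).
  have D : forall t, 0 < t -> derivable_pt_lim (wext w) t (Derive w t) /\
                              derivable_pt_lim (Derive w) t (- h (wext w t)).
  { intros t Ht. destruct (H1 t Ht) as [del [phi1 [Hd [Ha Hb]]]].
    have Eph : forall y, Rabs (y - t) < del -> phi1 y = Derive w y.
    { intros y Hy. symmetry. apply is_derive_unique. apply is_derive_Reals. auto. }
    split.
    - apply (dpl_ext_loc w _ t _ t Ht).
      + intros y Hy. rewrite Eq //. have := Rle_abs (y - t). have := Rabs_Ropp (y - t).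
        have := Rle_abs (- (y - t)). lra.
      + rewrite -Eph. apply Ha. all: rewrite Rminus_diag Rabs_R0; lra.
    - rewrite Eq; [|lra]. apply (dpl_ext_loc phi1 _ t _ del Hd Eph Hb). }
  split; [intros t Ht; apply D; auto|]. split; [intros t Ht; apply D; auto|]. split; auto.
  intros t Ht. destruct (Rle_lt_or_eq_dec _ _ Ht) as [Ht'|Ht'].
  - apply (dcont _ _ _ (proj1 (D t Ht'))).
  - rewrite -Ht'. apply cont_eps. intros eps He. destruct (H2 eps He) as [del [Hd Hb]].
    exists del; split; auto. intros y Hy. rewrite /wext (Rmax_left 0 0); [|lra].
    destruct (Rle_or_lt 0 y) as [Hy0|Hy0].
    + rewrite Rmax_right //. apply Hb. rewrite Rminus_0_r Rabs_pos_eq in Hy; lra.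
    + rewrite Rmax_left; [|lra]. rewrite Rminus_diag Rabs_R0; lra.
Qed.

Lemma absbound x y M : 0 <= M -> x ^ 2 <= M * y ^ 2 -> Rabs x <= sqrt M * Rabs y.
Proof.
  intros HM H. rewrite -(sqrt_pow2 (Rabs x)); [|apply Rabs_pos].
  rewrite -(sqrt_pow2 (Rabs y)); [|apply Rabs_pos]. rewrite -sqrt_mult; [|lra|nra].
  apply sqrt_le_1_alt. rewrite !pow2_abs. lra.
Qed.

Definition beta (P : R -> R) (c a : R) := if Rlt_dec a c then psi P a else - psi P a.

Lemma classify h P c w : Hcore h P c -> sol2 h w ->
  (w 0 < c /\ forall t, 0 < t -> w 0 < w t < c /\ Derive w t = psi P (w t)) \/
  (w 0 = c /\ forall t, 0 <= t -> w t = c) \/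
  (c < w 0 /\ forall t, 0 < t -> c < w t < w 0 /\ Derive w t = - psi P (w t)).
Proof.
  intros HC Hs. have HC' := HC. destruct HC' as [Hc [Hh [Hhc [Hhp [Hhn [HL [HdP HPc]]]]]]].
  have Hs' := Hs. destruct Hs' as [_ [_ [Hpos [C HCb]]]].
  destruct (sol2_ext h w Hs) as [D1 [D2 [Dc Deq]]].
  have Wp : forall t, 0 < t -> 0 < wext w t by (intros t Ht; rewrite Deq; [apply Hpos|]; lra).
  have WC : forall t, 0 < t -> wext w t <= C by (intros t Ht; rewrite Deq; [apply HCb|]; lra).
  have En := energy h P c (wext w) (Derive w) C HC D1 D2 Wp WC.
  destruct (Pquad h P c 0 (Rmax C c) HC (conj (Rlt_le _ _ Hc) (Rmax_r C c))) as [M [HM HMb]].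
  have Hm : 0 <= sqrt (2 * M) by apply sqrt_pos.
  have Hb : forall t, 0 < t -> Rabs (Derive w t) <= sqrt (2 * M) * Rabs (wext w t - c).
  { intros t Ht. apply absbound. lra. rewrite En //.
    have := Wp t Ht. have := WC t Ht. have := Rmax_l C c. intros. have := HMb (wext w t) ltac:(lra). lra. }
  have W0 : wext w 0 = w 0 by apply Deq; lra.
  destruct (Rtotal_order (w 0) c) as [Hl|[He|Hg]].
  - left. split; auto. intros t Ht.
    have := K1 (wext w) (Derive w) h P c _ 0 D1 D2 Dc En Hm Hb.
    intro K. have := K (fun t Ht E => Ppos h P c (wext w t) HC ltac:(have := Wp t Ht; lra) E)
      (fun t Ht E => Hhp (wext w t) (conj (Wp t Ht) E)) (fun t Ht => Rlt_le _ _ (Wp t Ht)) ltac:(lra) t Ht.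
    rewrite W0 Deq; [|lra]. intros [B1 [B2 B3]]. rewrite /psi. auto.
  - right; left. split; auto. intros t Ht. rewrite -Deq //.
    apply (K1eq (wext w) (Derive w) c _ D1 Dc Hm Hb); auto. lra.
  - right; right. split; auto. intros t Ht.
    have A1 : forall t, 0 < t -> derivable_pt_lim (fun t => 2 * c - wext w t) t (- Derive w t).
    { intros s Hs0. apply dpl_kminus; auto. }
    have A2 : forall t, 0 < t -> derivable_pt_lim (fun t => - Derive w t) t
                 (- (fun s => - h (2 * c - s)) ((fun t => 2 * c - wext w t) t)).
    { intros s Hs0. cbv beta. replace (2 * c - (2 * c - wext w s)) with (wext w s) by ring.
      apply dpl_opp. auto. }
    have A3 : forall t, 0 <= t -> continuity_pt (fun t => 2 * c - wext w t) t.
    { intros s Hs0. apply continuity_pt_minus. apply continuity_pt_const; intros ? ?; auto. auto. }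
    have A4 : forall t, 0 < t -> (- Derive w t) ^ 2 = 2 * (fun s => P (2 * c - s)) ((fun t => 2 * c - wext w t) t).
    { intros s Hs0. cbv beta. replace (2 * c - (2 * c - wext w s)) with (wext w s) by ring.
      rewrite -En //. ring. }
    have A5 : forall t, 0 < t -> Rabs (- Derive w t) <= sqrt (2 * M) * Rabs ((fun t => 2 * c - wext w t) t - c).
    { intros s Hs0. cbv beta. rewrite Rabs_Ropp. replace (2 * c - wext w s - c) with (- (wext w s - c)) by ring.
      rewrite Rabs_Ropp. auto. }
    have A6 : forall t, 0 < t -> (fun t => 2 * c - wext w t) t <> c ->
        0 < (fun s => P (2 * c - s)) ((fun t => 2 * c - wext w t) t).
    { intros s Hs0 E. cbv beta in E |- *. replace (2 * c - (2 * c - wext w s)) with (wext w s) by ring.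
      apply (Ppos h P c); [auto| have := Wp s Hs0; lra| lra]. }
    have A7 : forall t, 0 < t -> (fun t => 2 * c - wext w t) t < c ->
        0 < (fun s => - h (2 * c - s)) ((fun t => 2 * c - wext w t) t).
    { intros s Hs0 E. cbv beta in E |- *. replace (2 * c - (2 * c - wext w s)) with (wext w s) by ring.
      have := Hhn (wext w s) ltac:(lra). lra. }
    have A8 : forall t, 0 < t -> 2 * c - C <= (fun t => 2 * c - wext w t) t.
    { intros s Hs0. cbv beta. have := WC s Hs0. lra. }
    have A9 : (fun t => 2 * c - wext w t) 0 < c by (cbv beta; rewrite W0; lra).
    have := K1 (fun t => 2 * c - wext w t) (fun t => - Derive w t) (fun s => - h (2 * c - s))
      (fun s => P (2 * c - s)) c (sqrt (2 * M)) (2 * c - C) A1 A2 A3 A4 Hm A5 A6 A7 A8 A9 t Ht.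
    cbv beta. replace (2 * c - (2 * c - wext w t)) with (wext w t) by ring. rewrite W0 Deq; [|lra].
    intros [B1 [B2 B3]]. split; [lra|]. rewrite /psi. lra.
Qed.

Lemma FH_lt h P c a : Hcore h P c -> 0 < a < c -> exists M, FH h P a c M.
Proof.
  intros HC Ha. have HC' := HC. destruct HC' as [Hc [Hh [Hhc [Hhp [Hhn [HL [HdP HPc]]]]]]].
  destruct (Pquad h P c a c HC ltac:(lra)) as [M [HM HMb]].
  exists M. split; [lra|]. split; auto. split; auto. split.
  - intros s Hs. apply (Ppos h P c); auto; lra.
  - split; [lra|]. intros s Hs; apply HMb; lra.
Qed.

Lemma FH_gt h P c a : Hcore h P c -> c < a ->
  exists M, FH (fun s => - h (2 * c - s)) (fun s => P (2 * c - s)) (2 * c - a) c M.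
Proof.
  intros HC Ha. have HC' := HC. destruct HC' as [Hc [Hh [Hhc [Hhp [Hhn [HL [HdP HPc]]]]]]].
  destruct (Pquad h P c c a HC ltac:(lra)) as [M [HM HMb]].
  exists M. split; [lra|]. split.
  { intro x. apply continuity_pt_opp. apply (continuity_pt_comp (fun s => 2 * c - s) h); auto.
    apply continuity_pt_minus. apply continuity_pt_const; intros ? ?; auto. apply continuity_pt_id. }
  split.
  { intro x. apply (dpl_affine P x (- h (2 * c - x)) (2 * c)). apply HdP. }
  split.
  - intros s Hs. apply (Ppos h P c); auto; lra.
  - split; auto. intros s Hs. have := HMb (2 * c - s) ltac:(lra).
    replace (2 * c - s - c) with (- (s - c)) by ring. intros. nra.
Qed.

Lemma right_deriv_ext f g l : (forall t, 0 <= t -> f t = g t) -> right_deriv f 0 l -> right_deriv g 0 l.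
Proof.
  intros E H eps He. destruct (H eps He) as [d [Hd Hb]]. exists d; split; auto.
  intros hh Hh. rewrite -!E; try lra. apply Hb; auto.
Qed.

Lemma SUn h P c w1 w2 : Hcore h P c -> sol2 h w1 -> sol2 h w2 -> w1 0 = w2 0 ->
  forall t, 0 <= t -> w1 t = w2 t.
Proof.
  intros HC S1 S2 E0 t Ht.
  have P1 := proj1 (proj2 (proj2 S1)). have P2 := proj1 (proj2 (proj2 S2)).
  destruct (sol2_ext h w1 S1) as [D1 [_ [C1 Q1]]].
  destruct (sol2_ext h w2 S2) as [D2 [_ [C2 Q2]]].
  have W1 : wext w1 0 = w1 0 by apply Q1; lra. have W2 : wext w2 0 = w2 0 by apply Q2; lra.
  destruct (classify h P c w1 HC S1) as [[A1 B1]|[[A1 B1]|[A1 B1]]];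
  destruct (classify h P c w2 HC S2) as [[A2 B2]|[[A2 B2]|[A2 B2]]]; try lra.
  - have Ha : 0 < w1 0 < c by (have := P1 0 (Rle_refl 0); lra).
    destruct (FH_lt h P c (w1 0) HC Ha) as [M HF].
    rewrite -Q1 // -Q2 //.
    apply (flow_uniq h P (w1 0) c M (wext w1) (wext w2) HF); auto.
    + intros s Hs. rewrite Q1; [|lra]. rewrite -(proj2 (B1 s Hs)). auto.
    + intros s Hs. destruct (Rle_lt_or_eq_dec _ _ Hs) as [Hs'|Hs'].
      * rewrite Q1; [|lra]. have := B1 s Hs'. lra.
      * rewrite -Hs' W1. lra.
    + intros s Hs. rewrite Q2; [|lra]. rewrite -(proj2 (B2 s Hs)). auto.
    + by rewrite W2.
    + intros s Hs. destruct (Rle_lt_or_eq_dec _ _ Hs) as [Hs'|Hs'].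
      * rewrite Q2; [|lra]. have := B2 s Hs'. lra.
      * rewrite -Hs' W2. lra.
  - rewrite B1 // B2 //.
  - destruct (FH_gt h P c (w1 0) HC A1) as [M HF].
    rewrite -Q1 // -Q2 //.
    have := flow_uniq _ _ _ c M (fun t => 2 * c - wext w1 t) (fun t => 2 * c - wext w2 t) HF.
    intro K. have : 2 * c - wext w1 t = 2 * c - wext w2 t; [|lra].
    apply K; auto.
    + intros s Hs. rewrite /psi. replace (2 * c - (2 * c - wext w1 s)) with (wext w1 s) by ring.
      rewrite Q1; [|lra]. have E := proj2 (B1 s Hs). rewrite /psi in E.
      have -> : sqrt (2 * P (w1 s)) = - Derive w1 s by lra. apply dpl_kminus. auto.
    + intros s Hs. apply continuity_pt_minus; auto. apply continuity_pt_const; intros ? ?; auto.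
    + by rewrite W1.
    + intros s Hs. destruct (Rle_lt_or_eq_dec _ _ Hs) as [Hs'|Hs'].
      * rewrite Q1; [|lra]. have := B1 s Hs'. lra.
      * rewrite -Hs' W1. lra.
    + intros s Hs. rewrite /psi. replace (2 * c - (2 * c - wext w2 s)) with (wext w2 s) by ring.
      rewrite Q2; [|lra]. have E := proj2 (B2 s Hs). rewrite /psi in E.
      have -> : sqrt (2 * P (w2 s)) = - Derive w2 s by lra. apply dpl_kminus. auto.
    + intros s Hs. apply continuity_pt_minus; auto. apply continuity_pt_const; intros ? ?; auto.
    + by rewrite W2 E0.
    + intros s Hs. destruct (Rle_lt_or_eq_dec _ _ Hs) as [Hs'|Hs'].
      * rewrite Q2; [|lra]. have := B2 s Hs'. lra.
      * rewrite -Hs' W2. lra.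
Qed.

Lemma SDv h P c w b : Hcore h P c -> sol2 h w -> right_deriv w 0 b -> b = beta P c (w 0).
Proof.
  intros HC S Hb. have HC' := HC. destruct HC' as [Hc [Hh [Hhc [Hhp [Hhn [HL [HdP HPc]]]]]]].
  have HP : forall x, continuity_pt P x by (intro x; apply (dcont _ _ _ (HdP x))).
  have P1 := proj1 (proj2 (proj2 S)).
  destruct (sol2_ext h w S) as [D1 [_ [C1 Q1]]].
  have W1 : wext w 0 = w 0 by apply Q1; lra.
  rewrite /beta. destruct (classify h P c w HC S) as [[A1 B1]|[[A1 B1]|[A1 B1]]].
  - destruct (Rlt_dec (w 0) c) as [Hdd|Hdd]; [simpl|lra].
    have := RD (wext w) (psi P) C1.
    intro K. have K' : right_deriv (wext w) 0 (psi P (wext w 0)).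
    { apply K.
      - intros t Ht. rewrite Q1; [|lra]. rewrite -(proj2 (B1 t Ht)). auto.
      - rewrite W1. apply psi_cont; auto. apply (Ppos h P c); auto. have := P1 0 (Rle_refl 0); lra. lra. }
    rewrite W1 in K'. apply (right_deriv_unique w 0); auto. apply (right_deriv_ext (wext w)); auto.
  - destruct (Rlt_dec (w 0) c) as [Hdd|Hdd]; [lra|simpl].
    rewrite A1 /psi HPc Rmult_0_r sqrt_0 Ropp_0.
    apply (right_deriv_unique w 0); auto. intros eps He. exists 1. split; [lra|].
    intros hh Hhh. rewrite Rplus_0_l !B1; try lra. rewrite Rminus_diag /Rdiv Rmult_0_l Rminus_0_r Rabs_R0. lra.
  - destruct (Rlt_dec (w 0) c) as [Hdd|Hdd]; [lra|simpl].
    have := RD (wext w) (fun y => - psi P y) C1.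
    intro K. have K' : right_deriv (wext w) 0 (- psi P (wext w 0)).
    { apply K.
      - intros t Ht. rewrite Q1; [|lra]. rewrite -(proj2 (B1 t Ht)). auto.
      - rewrite W1. apply continuity_pt_opp. apply psi_cont; auto. apply (Ppos h P c); auto; lra. }
    rewrite W1 in K'. apply (right_deriv_unique w 0); auto. apply (right_deriv_ext (wext w)); auto.
Qed.

Lemma SEx h P c a : Hcore h P c -> 0 < a -> exists w, sol2 h w /\ w 0 = a /\ right_deriv w 0 (beta P c a).
Proof.
  intros HC Ha. have HC' := HC. destruct HC' as [Hc [Hh [Hhc [Hhp [Hhn [HL [HdP HPc]]]]]]].
  have HP : forall x, continuity_pt P x by (intro x; apply (dcont _ _ _ (HdP x))).
  rewrite /beta. destruct (Rtotal_order a c) as [Hl|[He|Hg]].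
  - destruct (Rlt_dec a c) as [Hdd|Hdd]; [simpl|lra].
    destruct (FH_lt h P c a HC (conj Ha Hl)) as [M HF].
    destruct (flow h P a c M HF) as [W [W0 [Wr [Wc [Wd Wdd]]]]].
    exists W. split; [|split; auto].
    + split; [|split; [|split]].
      * intros t Ht. exists t, (fun s => psi P (W s)). split; auto. split; auto.
        intros s Hs. apply Wd. have := Rle_abs (t - s). rewrite -Rabs_Ropp in Hs.
        replace (- (s - t)) with (t - s) in Hs by ring. lra.
      * intros eps He. destruct (proj1 (cont_eps W 0) (Wc 0 (Rle_refl 0)) eps He) as [d [Hd Hb]].
        exists d; split; auto. intros t Ht. apply Hb. rewrite Rminus_0_r Rabs_pos_eq; lra.
      * intros t Ht. have := Wr t Ht. lra.
      * exists c. intros t Ht. have := Wr t Ht. lra.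
    + rewrite -W0. apply RD; auto. rewrite W0. apply psi_cont; auto. apply (Ppos h P c); auto; lra.
  - destruct (Rlt_dec a c) as [Hdd|Hdd]; [lra|simpl].
    exists (fun _ => c). split; [|split; auto].
    + split; [|split; [|split]].
      * intros t Ht. rewrite Hhc Ropp_0. apply (second_deriv_const_intro _ c); auto.
      * intros eps He0. exists 1. split; [lra|]. intros. rewrite Rminus_diag Rabs_R0. lra.
      * intros. lra.
      * exists c. intros; lra.
    + rewrite He /psi HPc Rmult_0_r sqrt_0 Ropp_0. intros eps Heps. exists 1. split; [lra|].
      intros. rewrite Rminus_diag /Rdiv Rmult_0_l Rminus_0_r Rabs_R0. lra.
  - destruct (Rlt_dec a c) as [Hdd|Hdd]; [lra|simpl].
    destruct (FH_gt h P c a HC Hg) as [M HF].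
    destruct (flow _ _ _ c M HF) as [W [W0 [Wr [Wc [Wd Wdd]]]]].
    have Wc' : forall t, 0 <= t -> continuity_pt (fun t => 2 * c - W t) t.
    { intros s Hs. apply continuity_pt_minus; auto. apply continuity_pt_const; intros ? ?; auto. }
    have Wd' : forall t, 0 < t -> derivable_pt_lim (fun t => 2 * c - W t) t (- psi P (2 * c - W t)).
    { intros t Ht. have := dpl_kminus _ _ _ (2 * c) (Wd t Ht). by rewrite /psi. }
    exists (fun t => 2 * c - W t). split; [|split; [rewrite W0; ring|]].
    + split; [|split; [|split]].
      * intros t Ht. exists t, (fun s => - psi P (2 * c - W s)). split; auto. split.
        -- intros s Hs. apply Wd'. have := Rle_abs (t - s). rewrite -Rabs_Ropp in Hs.
           replace (- (s - t)) with (t - s) in Hs by ring. lra.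
        -- have H := dpl_opp _ _ _ (Wdd t Ht). cbv beta in H. rewrite Ropp_involutive in H. exact H.
      * intros eps He. destruct (proj1 (cont_eps _ 0) (Wc' 0 (Rle_refl 0)) eps He) as [d [Hd Hb]].
        exists d; split; auto. intros t Ht. apply Hb. rewrite Rminus_0_r Rabs_pos_eq; lra.
      * intros t Ht. have := Wr t Ht. lra.
      * exists a. intros t Ht. have := Wr t Ht. lra.
    + have := RD (fun t => 2 * c - W t) (fun y => - psi P y) Wc' Wd'.
      rewrite W0. replace (2 * c - (2 * c - a)) with a by ring. intro K. apply K.
      apply continuity_pt_opp. apply psi_cont; auto. apply (Ppos h P c); auto; lra.
Qed.

Lemma psi_cont' P x : (forall x, continuity_pt P x) -> 0 <= P x -> continuity_pt (psi P) x.
Proof.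
  intros HP Hx. apply continuity_pt_filterlim. rewrite /psi.
  apply: (continuous_comp (fun s => 2 * P s) sqrt).
  - apply: (continuous_scal_r 2 P). apply cont_to_cont; auto.
  - apply cont_to_cont. apply continuity_pt_sqrt. lra.
Qed.

Lemma beta_pos h P c a : Hcore h P c -> 0 <= a < c -> 0 < beta P c a.
Proof.
  intros HC Ha. rewrite /beta. destruct (Rlt_dec a c) as [Hd|Hd]; [simpl|lra].
  apply sqrt_lt_R0. have := Ppos h P c a HC ltac:(lra) ltac:(lra). lra.
Qed.

Lemma beta_neg h P c a : Hcore h P c -> c < a -> beta P c a < 0.
Proof.
  intros HC Ha. rewrite /beta. destruct (Rlt_dec a c) as [Hd|Hd]; [lra|simpl].
  have : 0 < psi P a; [|lra]. apply sqrt_lt_R0. have := Ppos h P c a HC ltac:(have := proj1 HC; lra) ltac:(lra). lra.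
Qed.

Lemma beta_c h P c : Hcore h P c -> beta P c c = 0.
Proof.
  intros HC. rewrite /beta. destruct (Rlt_dec c c) as [Hd|Hd]; [lra|simpl].
  rewrite /psi. destruct HC as [_ [_ [_ [_ [_ [_ [_ HPc]]]]]]]. rewrite HPc Rmult_0_r sqrt_0. ring.
Qed.

Lemma beta_decr h P c a b : Hcore h P c -> 0 <= a < b -> beta P c b < beta P c a.
Proof.
  intros HC Hab. have HC' := HC. destruct HC' as [Hc [Hh [Hhc [Hhp [Hhn [HL [HdP HPc]]]]]]].
  destruct (Rlt_or_le b c) as [Hb|Hb].
  - rewrite /beta. destruct (Rlt_dec a c) as [Hd|Hd]; [simpl|lra]. destruct (Rlt_dec b c) as [Hd'|Hd']; [simpl|lra].
    apply sqrt_lt_1_alt. split. have := Ppos h P c b HC ltac:(lra) ltac:(lra). lra.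
    have := mono_gt P (fun x => - h x) a b (proj2 Hab) (fun x _ => HdP x) (fun x _ => dcont _ _ _ (HdP x)).
    intro M. have := M (fun x Hx => ltac:(have := Hhp x ltac:(lra); lra)). lra.
  - destruct (Rlt_or_le a c) as [Ha|Ha].
    + have := beta_pos h P c a HC ltac:(lra). destruct (Req_dec b c) as [E|E].
      * rewrite E (beta_c h) //.
      * have := beta_neg h P c b HC ltac:(lra). lra.
    + rewrite /beta. destruct (Rlt_dec a c) as [Hd|Hd]; [lra|simpl]. destruct (Rlt_dec b c) as [Hd'|Hd']; [lra|simpl].
      apply Ropp_lt_contravar. apply sqrt_lt_1_alt. split. have := Pnn h P c a HC ltac:(lra). lra.
      have := mono_lt P (fun x => - h x) a b (proj2 Hab) (fun x _ => HdP x) (fun x _ => dcont _ _ _ (HdP x)).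
      intro M. have := M (fun x Hx => ltac:(have := Hhn x ltac:(lra); lra)). lra.
Qed.

Lemma beta_cont h P c x : Hcore h P c -> 0 <= x -> continuity_pt (beta P c) x.
Proof.
  intros HC Hx. have HC' := HC. destruct HC' as [Hc [Hh [Hhc [Hhp [Hhn [HL [HdP HPc]]]]]]].
  have HP : forall x, continuity_pt P x by (intro y; apply (dcont _ _ _ (HdP y))).
  destruct (Rtotal_order x c) as [Hl|[He|Hg]].
  - apply (cont_ext_loc (psi P) _ x (c - x)). lra.
    + intros y Hy. rewrite /beta. destruct (Rlt_dec y c) as [Hd|Hd]; [done|].
      have := Rle_abs (y - x). lra.
    + apply psi_cont'; auto. apply (Pnn h P c); auto.
  - subst x. have Hpc := psi_cont' P c HP ltac:(lra). apply cont_eps. move/cont_eps: Hpc => Hpc.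
    intros eps He. destruct (Hpc eps He) as [d [Hd Hb]]. exists d. split; auto. intros y Hy.
    have := Hb y Hy. rewrite (beta_c h) // {2}/psi HPc Rmult_0_r sqrt_0 !Rminus_0_r.
    rewrite /beta. destruct (Rlt_dec y c); simpl; auto. by rewrite Rabs_Ropp.
  - apply (cont_ext_loc (fun y => - psi P y) _ x (x - c)). lra.
    + intros y Hy. rewrite /beta. destruct (Rlt_dec y c) as [Hd|Hd]; [|done].
      have := Rle_abs (- (y - x)). rewrite Rabs_Ropp. lra.
    + apply continuity_pt_opp. apply psi_cont'; auto. apply (Pnn h P c); auto; lra.
Qed.

Lemma lip_cont g : loc_lipschitz g -> forall x, continuity_pt g x.
Proof.
  intros Hg x. destruct (Hg (x - 1) (x + 1)) as [L HL]. apply cont_eps. intros eps He.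
  exists (Rmin 1 (eps / (Rabs L + 1))). split.
  { apply Rmin_pos; [lra|]. apply Rdiv_lt_0_compat; [lra|]. have := Rabs_pos L; lra. }
  intros y Hy. have H1 := Rmin_l 1 (eps / (Rabs L + 1)). have H2 := Rmin_r 1 (eps / (Rabs L + 1)).
  have Hy' : x - 1 <= y <= x + 1 by (have := Rle_abs (y - x); have := Rle_abs (- (y - x)); rewrite Rabs_Ropp; lra).
  have := HL y x Hy' ltac:(lra). intro K.
  have : L * Rabs (y - x) <= Rabs L * Rabs (y - x) by (apply Rmult_le_compat_r; [apply Rabs_pos| apply Rle_abs]).
  have : Rabs L * Rabs (y - x) <= Rabs L * (eps / (Rabs L + 1)).
  { apply Rmult_le_compat_l; [apply Rabs_pos| lra]. }
  have : Rabs L * (eps / (Rabs L + 1)) < eps.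
  { have := Rabs_pos L. intro. apply (Rmult_lt_reg_r (Rabs L + 1)); [lra|].
    replace (Rabs L * (eps / (Rabs L + 1)) * (Rabs L + 1)) with (Rabs L * eps) by (field; lra). nra. }
  lra.
Qed.

Lemma kpp_core g D c : loc_lipschitz g -> 0 < D -> 0 < c -> g c = 0 ->
  (forall s, 0 < s < c -> 0 < g s) -> (forall s, c < s -> g s < 0) ->
  Hcore (fun s => g s / D) (fun s => RInt (fun s => g s / D) s c) c.
Proof.
  intros Hg HD Hc Hgc Hp Hn.
  have Hgcont := lip_cont g Hg.
  have Hhc : forall x, continuity_pt (fun s => g s / D) x.
  { intro x. apply (continuity_pt_mult g (fun _ => / D)). auto. apply continuity_pt_const. intros ? ?; auto. }
  split; auto. split; auto. split. { rewrite Hgc. rewrite /Rdiv Rmult_0_l. reflexivity. }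
  split. { intros s Hs. apply Rdiv_lt_0_compat; auto. }
  split. { intros s Hs. have := Hn s Hs. intro. apply Rdiv_neg_pos; auto. }
  split.
  { intros A B. destruct (Hg (Rmin A c) (Rmax B c)) as [L HL]. exists ((Rabs L + 1) / D). split.
    { apply Rdiv_lt_0_compat; [have := Rabs_pos L; lra| auto]. }
    intros s Hs. have := HL s c ltac:(have := Rmin_l A c; have := Rmax_l B c; lra)
      ltac:(have := Rmin_r A c; have := Rmax_r B c; lra).
    rewrite Hgc Rminus_0_r. intro K. rewrite Rabs_div; [|lra]. rewrite (Rabs_pos_eq D); [|lra].
    apply (Rmult_le_reg_r D); [auto|]. rewrite /Rdiv. field_simplify; [|lra|lra].
    have : L * Rabs (s - c) <= Rabs L * Rabs (s - c) by (apply Rmult_le_compat_r; [apply Rabs_pos| apply Rle_abs]).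
    have := Rabs_pos (s - c). nra. }
  split.
  { intro x. apply is_derive_Reals.
    apply: (is_derive_RInt' (fun s => g s / D) (fun a0 => RInt (fun s => g s / D) a0 c) x c).
    - apply (loc_of_abs _ x 1). lra. intros y _.
      have HH : ex_RInt (fun s => g s / D) y c.
      { apply: ex_RInt_continuous. intros z _. apply cont_to_cont. auto. }
      exact (RInt_correct _ _ _ HH).
    - apply cont_to_cont. auto. }
  rewrite RInt_point. reflexivity.
Qed.

Lemma system_exists hu Pu hv Pv S D d mu nu : Hcore hu Pu 1 -> Hcore hv Pv S ->
  0 < D -> 0 < d -> 0 < mu -> 0 < nu ->
  exists u0 v0, 0 < u0 /\ 0 < v0 /\ D * (- beta Pu 1 u0) = nu * v0 - mu * u0 /\
    - d * beta Pv S v0 = mu * u0 - nu * v0.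
Proof.
  intros Hu Hv HD Hd Hmu Hnu. have HS := proj1 Hv.
  set A := fun u => - D * beta Pu 1 u.
  set p := fun u => (A u + mu * u) / nu.
  have Acont : forall u, 0 <= u -> continuity_pt A u.
  { intros u Hu0. apply (continuity_pt_mult (fun _ => - D) (beta Pu 1)).
    apply continuity_pt_const; intros ? ?; auto. apply (beta_cont hu); auto. }
  have pcont : forall u, 0 <= u -> continuity_pt p u.
  { intros u Hu0. apply (continuity_pt_mult (fun u => A u + mu * u) (fun _ => / nu)).
    apply continuity_pt_plus. auto. apply (continuity_pt_mult (fun _ => mu) (fun u => u)).
    apply continuity_pt_const; intros ? ?; auto. apply continuity_pt_id.
    apply continuity_pt_const; intros ? ?; auto. }
  have Aincr : forall x y, 0 <= x < y -> A x < A y.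
  { intros x y Hxy. rewrite /A. have := beta_decr hu Pu 1 x y Hu Hxy. nra. }
  have pincr : forall x y, 0 <= x < y -> p x < p y.
  { intros x y Hxy. rewrite /p. have := Aincr x y Hxy. intro.
    apply Rmult_lt_compat_r. apply Rinv_0_lt_compat; lra. nra. }
  have p0 : p 0 < 0.
  { rewrite /p /A. have := beta_pos hu Pu 1 0 Hu ltac:(lra). intro.
    apply Rdiv_neg_pos; auto. nra. }
  set u1 := 2 + nu * S / mu.
  have HnS : 0 < nu * S / mu by (apply Rdiv_lt_0_compat; [apply Rmult_lt_0_compat|]; lra).
  have Hu1 : 1 < u1 by (unfold u1; lra).
  have Au1 : 0 < A u1 by (rewrite /A; have := beta_neg hu Pu 1 u1 Hu Hu1; nra).
  have pu1 : S < p u1.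
  { rewrite /p. apply (Rmult_lt_reg_r nu); auto. rewrite /Rdiv Rmult_assoc Rinv_l; [|lra].
    have : mu * u1 = 2 * mu + nu * S by (unfold u1; field; lra). nra. }
  destruct (IVT_interv p 0 u1) as [us [Hus Eus]].
  { intros; apply pcont; lra. } lra. auto. lra.
  have Hus0 : 0 < us. { destruct (Rle_lt_or_eq_dec _ _ (proj1 Hus)) as [|E]; auto. rewrite -E in Eus. lra. }
  have Hus1 : us < u1. { destruct (Rle_lt_or_eq_dec _ _ (proj2 Hus)) as [|E]; auto. rewrite E in Eus. lra. }
  have pnn : forall u, us <= u -> 0 <= p u.
  { intros u Hu'. destruct (Rle_lt_or_eq_dec _ _ Hu') as [H|H]. have := pincr us u ltac:(lra). lra. subst; lra. }
  set k := fun u => - (d * beta Pv S (p u) - A u).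
  destruct (IVT_interv k us u1) as [u0 [Hu0 Eu0]].
  { intros u Hu'. apply continuity_pt_opp. apply continuity_pt_minus; [|apply Acont; lra].
    apply (continuity_pt_mult (fun _ => d) (fun u => beta Pv S (p u))). apply continuity_pt_const; intros ? ?; auto.
    apply (continuity_pt_comp p (beta Pv S)). apply pcont; lra. apply (beta_cont hv); auto. apply pnn; lra. }
  { auto. }
  { rewrite /k Eus. have := beta_pos hv Pv S 0 Hv ltac:(lra). have : A us = - mu * us.
    { have : p us * nu = A us + mu * us by (rewrite /p; field; lra). rewrite Eus. lra. } nra. }
  { rewrite /k. have := beta_neg hv Pv S (p u1) Hv pu1. nra. }
  have Hu0s : us < u0. { destruct (Rle_lt_or_eq_dec _ _ (proj1 Hu0)) as [|E]; auto. exfalso. rewrite -E in Eu0.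
    rewrite /k Eus in Eu0. have := beta_pos hv Pv S 0 Hv ltac:(lra). have : A us = - mu * us.
    { have : p us * nu = A us + mu * us by (rewrite /p; field; lra). rewrite Eus. lra. } nra. }
  have Hv0 : 0 < p u0 by (have := pincr us u0 ltac:(lra); lra).
  exists u0, (p u0). split; [lra|]. split; auto.
  have Ep : nu * p u0 = A u0 + mu * u0 by (rewrite /p; field; lra).
  split.
  - rewrite Ep /A. ring.
  - rewrite /k in Eu0. rewrite Ep. lra.
Qed.

Lemma system_unique hu Pu hv Pv S D d mu nu u1 v1 u2 v2 : Hcore hu Pu 1 -> Hcore hv Pv S ->
  0 < D -> 0 < d -> 0 < mu -> 0 < nu -> 0 < u1 -> 0 < v1 -> 0 < u2 -> 0 < v2 ->
  D * (- beta Pu 1 u1) = nu * v1 - mu * u1 -> - d * beta Pv S v1 = mu * u1 - nu * v1 ->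
  D * (- beta Pu 1 u2) = nu * v2 - mu * u2 -> - d * beta Pv S v2 = mu * u2 - nu * v2 ->
  u1 = u2 /\ v1 = v2.
Proof.
  intros Hu Hv HD Hd Hmu Hnu Hu1 Hv1 Hu2 Hv2 E1 F1 E2 F2.
  have key : forall a1 b1 a2 b2, 0 < a1 -> 0 < b1 -> 0 < a2 -> 0 < b2 ->
    D * (- beta Pu 1 a1) = nu * b1 - mu * a1 -> - d * beta Pv S b1 = mu * a1 - nu * b1 ->
    D * (- beta Pu 1 a2) = nu * b2 - mu * a2 -> - d * beta Pv S b2 = mu * a2 - nu * b2 -> ~ a1 < a2.
  { intros a1 b1 a2 b2 Ha1 Hb1 Ha2 Hb2 G1 H1 G2 H2 Hlt.
    have := beta_decr hu Pu 1 a1 a2 Hu ltac:(lra). intro B1.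
    have Hb : b1 < b2 by nra.
    have := beta_decr hv Pv S b1 b2 Hv ltac:(lra). intro B2. nra. }
  destruct (Rtotal_order u1 u2) as [H|[H|H]].
  - exfalso. exact (key u1 v1 u2 v2 Hu1 Hv1 Hu2 Hv2 E1 F1 E2 F2 H).
  - subst. split; auto. nra.
  - exfalso. exact (key u2 v2 u1 v1 Hu2 Hv2 Hu1 Hv1 E2 F2 E1 F1 H).
Qed.

Lemma lap_of_1d n (U : pt n -> R) (phi : R -> R) x L :
  (forall y : pt n, U y = phi y.2) -> second_deriv phi x.2 L -> has_laplacian U x L.
Proof.
  intros HU H. exists (fun i => match i with Some _ => 0 | None => L end). split.
  - intros [i|].
    + apply (second_deriv_const_intro _ (phi x.2)). intro y. rewrite /dir HU. reflexivity.
    + apply (second_deriv_ext phi); auto. intro y. rewrite /dir HU. reflexivity.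
  - rewrite bigR0 //. ring.
Qed.

Lemma lap_1d n (U : pt n -> R) x L :
  (forall y', U (y', x.2) = U (x.1, x.2)) -> has_laplacian U x L ->
  second_deriv (fun t => U (x.1, t)) x.2 L.
Proof.
  intros HU [lam [H1 H2]].
  have Z : forall i, lam (Some i) = 0.
  { intro i. apply (second_deriv_const (dir U x (Some i)) (U (x.1, x.2)) (coord x (Some i))); auto.
    intro y. rewrite /dir. apply HU. }
  rewrite bigR0 // Rplus_0_l in H2. rewrite H2. exact (H1 None).
Qed.

Lemma right_to_left w l : right_deriv w 0 l -> left_deriv (fun t => w (- t)) 0 (- l).
Proof.
  intros H eps He. destruct (H eps He) as [d [Hd Hb]]. exists d. split; auto.
  intros hh Hh. have := Hb (- hh) ltac:(lra). rewrite !Rplus_0_l Ropp_0.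
  replace ((w (- hh) - w 0) / hh - - l) with (- ((w (- hh) - w 0) / - hh - l)) by (field; lra).
  by rewrite Rabs_Ropp.
Qed.

Lemma left_to_right phi l : left_deriv phi 0 l -> right_deriv (fun t => phi (- t)) 0 (- l).
Proof.
  intros H eps He. destruct (H eps He) as [d [Hd Hb]]. exists d. split; auto.
  intros hh Hh. have := Hb (- hh) ltac:(lra). rewrite !Rplus_0_l Ropp_0.
  replace ((phi (- hh) - phi 0) / hh - - l) with (- ((phi (- hh) - phi 0) / - hh - l)) by (field; lra).
  by rewrite Rabs_Ropp.
Qed.

Lemma rel_cont h w : sol2 h w -> forall s, 0 <= s -> forall eps, 0 < eps ->
  exists del, 0 < del /\ forall t, 0 <= t -> Rabs (t - s) < del -> Rabs (w t - w s) < eps.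
Proof.
  intros S s Hs eps He. destruct (sol2_ext h w S) as [_ [_ [Dc Q]]].
  destruct (proj1 (cont_eps _ s) (Dc s Hs) eps He) as [d [Hd Hb]].
  exists d. split; auto. intros t Ht Hts. rewrite -(Q t) // -(Q s) //. auto.
Qed.

Theorem proposition2p2 (N : nat) (D d mu nu : R) (g f : R -> R) :
  (2 <= N)%nat -> 0 < D -> 0 < d -> 0 < mu -> 0 < nu ->
  KPP_g g -> KPP_f f ->
  exists U V : pt N.-1 -> R,
    (steady_state D d mu nu g f U V /\ positive_bounded U V /\
     tangential_indep U V) /\
    forall U' V' : pt N.-1 -> R,
      steady_state D d mu nu g f U' V' -> positive_bounded U' V' ->
      tangential_indep U' V' ->
      (forall x : pt N.-1, x.2 <= 0 -> U' x = U x) /\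
      (forall x : pt N.-1, 0 <= x.2 -> V' x = V x).
Proof.
  intros HN HD Hd Hmu Hnu [Hgl [g0 [_ [Hg0 [Hg1 [Hgp Hgn]]]]]] [S [HS [Hfl [f0 [_ [Hf0 [HfS [Hfp Hfn]]]]]]]].
  have Hu := kpp_core g D 1 Hgl HD Rlt_0_1 Hg1 (fun s Hs => proj1 (Hgp s Hs)) Hgn.
  have Hv := kpp_core f d S Hfl Hd HS HfS (fun s Hs => proj1 (Hfp s Hs)) Hfn.
  destruct (system_exists _ _ _ _ S D d mu nu Hu Hv HD Hd Hmu Hnu) as [u0 [v0 [Hu0 [Hv0 [E1 E2]]]]].
  destruct (SEx _ _ 1 u0 Hu Hu0) as [wu [Su [Wu0 Ru]]].
  destruct (SEx _ _ S v0 Hv Hv0) as [wv [Sv [Wv0 Rv]]].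
  exists (fun x => wu (- x.2)), (fun x => wv x.2). split.
  { split; [|split].
    - split; [|split; [|split; [|split]]].
      + intros x Hx. exists (- (g (wu (- x.2)) / D)). split.
        * apply (lap_of_1d _ _ (fun t => wu (- t))). intros; reflexivity.
          apply second_deriv_reflect. apply (proj1 Su). lra.
        * field. lra.
      + intros x Hx. exists (- (f (wv x.2) / d)). split.
        * apply (lap_of_1d _ _ wv). intros; reflexivity. apply (proj1 Sv). lra.
        * field. lra.
      + intros x Hx eps He. rewrite /lowerH in Hx.
        destruct (rel_cont _ wu Su (- x.2) ltac:(lra) eps He) as [del [Hdel Hb]].
        exists del. split; [auto|]. intros z Hz _ Hz2. rewrite /lowerH in Hz. apply Hb. lra.
        replace (- z.2 - - x.2) with (- (z.2 - x.2)) by ring. by rewrite Rabs_Ropp.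
      + intros x Hx eps He. rewrite /upperH in Hx.
        destruct (rel_cont _ wv Sv x.2 Hx eps He) as [del [Hdel Hb]].
        exists del. split; [auto|]. intros z Hz _ Hz2. rewrite /upperH in Hz. apply Hb; auto.
      + intro x'. exists (- beta (fun s => RInt (fun s0 => g s0 / D) s 1) 1 u0), (beta (fun s => RInt (fun s0 => f s0 / d) s S) S v0). split; [|split].
        * exact (right_to_left wu _ Ru).
        * exact Rv.
        * change (D * - beta (fun s => RInt (fun s0 => g s0 / D) s 1) 1 u0 = nu * wv 0 - mu * wu (- 0) /\
                  - d * beta (fun s => RInt (fun s0 => f s0 / d) s S) S v0 = mu * wu (- 0) - nu * wv 0).
          rewrite Ropp_0 Wu0 Wv0. split; auto.
    - destruct Su as [_ [_ [Pu [Cu HCu]]]]. destruct Sv as [_ [_ [Pv [Cv HCv]]]].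
      split; [|split; [|split]].
      + intros x Hx. apply Pu. lra.
      + intros x Hx. apply Pv. lra.
      + exists Cu. intros x Hx. have := Pu (- x.2) ltac:(lra). have := HCu (- x.2) ltac:(lra).
        intros. rewrite Rabs_pos_eq; lra.
      + exists Cv. intros x Hx. have := Pv x.2 Hx. have := HCv x.2 Hx.
        intros. rewrite Rabs_pos_eq; lra.
    - split; intros; reflexivity. }
  intros U' V' [SU [SV [CU [CV BC]]]] [PU [PV [[CU' HCU] [CV' HCV]]]] [TU TV].
  pose z0 := (fun _ => 0) : 'I_N.-1 -> R.
  pose w1 := fun t => U' (z0, - t). pose w2 := fun t => V' (z0, t).
  have S1 : sol2 (fun s => g s / D) w1.
  { split; [|split; [|split]].
    - intros t Ht. destruct (SU (z0, - t) ltac:(simpl; lra)) as [L [HL EL]].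
      have K := lap_1d _ U' (z0, - t) L (fun y' => TU y' z0 (- t) ltac:(lra)) HL.
      have -> : - (g (w1 t) / D) = L. { rewrite /w1 -EL. field. lra. }
      exact (second_deriv_reflect (fun s => U' (z0, s)) t L K).
    - intros eps He. destruct (CU (z0, - 0) ltac:(rewrite /lowerH /=; lra) eps He) as [del [Hdel Hb]].
      exists del. split; auto. intros t Ht. apply (Hb (z0, - t)).
      + rewrite /lowerH /=; lra.
      + intros i. rewrite /= Rminus_diag Rabs_R0. lra.
      + rewrite /=. replace (- t - - 0) with (- t) by ring. rewrite Rabs_Ropp Rabs_pos_eq; lra.
    - intros t Ht. apply PU. rewrite /=. lra.
    - exists CU'. intros t Ht. have := HCU (z0, - t) ltac:(rewrite /=; lra).
      have := Rle_abs (U' (z0, - t)). rewrite /w1. lra. }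
  have S2 : sol2 (fun s => f s / d) w2.
  { split; [|split; [|split]].
    - intros t Ht. destruct (SV (z0, t) ltac:(simpl; lra)) as [L [HL EL]].
      have K := lap_1d _ V' (z0, t) L (fun y' => TV y' z0 t ltac:(lra)) HL.
      have -> : - (f (w2 t) / d) = L. { rewrite /w2 -EL. field. lra. }
      exact K.
    - intros eps He. destruct (CV (z0, 0) ltac:(rewrite /upperH /=; lra) eps He) as [del [Hdel Hb]].
      exists del. split; auto. intros t Ht. apply (Hb (z0, t)).
      + rewrite /upperH /=; lra.
      + intros i. rewrite /= Rminus_diag Rabs_R0. lra.
      + rewrite /= Rminus_0_r Rabs_pos_eq; lra.
    - intros t Ht. apply PV. rewrite /=. lra.
    - exists CV'. intros t Ht. have := HCV (z0, t) ltac:(rewrite /=; lra).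
      have := Rle_abs (V' (z0, t)). rewrite /w2. lra. }
  destruct (BC z0) as [a [b [La [Rb [F1 F2]]]]].
  have R1 : right_deriv w1 0 (- a) := left_to_right _ a La.
  have Ea := SDv _ _ 1 w1 (- a) Hu S1 R1.
  have Eb := SDv _ _ S w2 b Hv S2 Rb.
  have Hw10 : w1 0 = U' (z0, 0) by rewrite /w1 Ropp_0.
  have P10 : 0 < w1 0 by (apply (proj1 (proj2 (proj2 S1))); lra).
  have P20 : 0 < w2 0 by (apply (proj1 (proj2 (proj2 S2))); lra).
  destruct (system_unique _ _ _ _ S D d mu nu (w1 0) (w2 0) u0 v0 Hu Hv HD Hd Hmu Hnu P10 P20 Hu0 Hv0)
    as [Q1 Q2]; auto.
  { rewrite -Ea Ropp_involutive Hw10. exact F1. }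
  { rewrite -Eb Hw10. exact F2. }
  split.
  - intros [x1 x2] Hx. simpl in Hx |- *. rewrite (TU x1 z0 x2 Hx).
    have := SUn _ _ 1 w1 wu Hu S1 Su ltac:(rewrite Wu0; auto) (- x2) ltac:(lra).
    rewrite /w1 Ropp_involutive. auto.
  - intros [x1 x2] Hx. simpl in Hx |- *. rewrite (TV x1 z0 x2 Hx).
    exact (SUn _ _ S w2 wv Hv S2 Sv ltac:(rewrite Wv0; auto) x2 Hx).
Qed.
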